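(* Let $(X,e\colon X\to M\otimes X)$ be a coalgebra for $F$ on $\mathbf{Met_3}^{C}$. Then there is at most one morphism $h\colon X\to S$ in $\mathbf{Met_3}^{C}$ with $s\circ h=(M\otimes h)\circ e$; in particular, the map $f\colon X\to S$, $f(x)=\lim_{n\to\infty}\theta_n(x)$ (where $\chi_0=x$, $\chi_n=(M^{n-1}\otimes e)(\chi_{n-1})=m_0\otimes\cdots\otimes m_{n-1}\otimes x_n$ and $\theta_n(x)=m_0\otimes\cdots\otimes m_{n-1}\otimes z\in G$ for a fixed $z\in\{T,L,R\}$), is the unique such morphism.
   Context: A tripointed metric space is a set with three distinct points $T,L,R$ and a metric bounded by $1$ in which $T,L,R$ have pairwise distance $1$. $\mathbf{Met_3}^{C}$: tripointed metric spaces with continuous maps preserving $T,L,R$. Let $M=\{a,b,c\}$. $M\times X$ has metric $\tfrac12d(x,y)$ within a copy and $1$ between copies; $M\otimes X$ is the quotient metric space by the equivalence relation generated by $(b,T)\sim(a,L)$, $(a,R)\sim(c,T)$, $(c,L)\sim(b,R)$, elements $m\otimes x$, distinguished points $a\otimes T,b\otimes L,c\otimes R$; $F=M\otimes-$, $(M\otimes f)(m\otimes x)=m\otimes f(x)$; $M^n\otimes-$ is the $n$-fold iterate. A coalgebra is $(X,e\colon X\to FX)$. With $I=\{T,L,R\}$ discrete and $!\colon I\to FI$ ($T\mapsto a\otimes T$, $L\mapsto b\otimes L$, $R\mapsto c\otimes R$), $G$ is the metric union of the chain of isometric embeddings $I\to FI\to F^2I\to\cdots$, and $g\colon M\otimes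 G\to G$, $g(m\otimes w)=m\otimes w$, is a bijective isometry. $S$ is the Cauchy completion of $G$ (distinguished points $T,L,R$); completing $g$ gives a bijective isometry $\psi\colon M\otimes S\to S$, and $s=\psi^{-1}$. The map $f$ above is well defined, continuous, and satisfies $s\circ f=(M\otimes f)\circ e$. *)

(* Defs.v *)
From Stdlib Require Import Reals Lra Lia Relations ClassicalEpsilon Eqdep_dec Arith.
Open Scope R_scope.

Inductive Mlab : Type := ma | mb | mc.

Definition Mlab_eqb (m m' : Mlab) : bool :=
  match m, m' with ma, ma | mb, mb | mc, mc => true | _, _ => false end.

Record pre3 : Type := Pre3 {
  car :> Type;
  dist : car -> car -> R;
  pT : car; pL : car; pR : car }.
Arguments dist {_} _ _.
Arguments pT {_}. Arguments pL {_}. Arguments pR {_}.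

Definition is_metric (A : Type) (d : A -> A -> R) : Prop :=
  (forall x y, 0 <= d x y) /\
  (forall x y, d x y = 0 <-> x = y) /\
  (forall x y, d x y = d y x) /\
  (forall x y z, d x z <= d x y + d y z).

Definition is_tri_met (X : pre3) : Prop :=
  is_metric (car X) (@dist X) /\
  (forall x y : car X, dist x y <= 1) /\
  dist (@pT X) (@pL X) = 1 /\ dist (@pL X) (@pR X) = 1 /\ dist (@pT X) (@pR X) = 1.

Definition continuous_map (X Y : pre3) (f : car X -> car Y) : Prop :=
  forall x eps, 0 < eps -> exists delta, 0 < delta /\
    forall y, dist x y < delta -> dist (f x) (f y) < eps.

Definition morphism3 (X Y : pre3) (f : car X -> car Y) : Prop :=
  continuous_map X Y f /\ f pT = pT /\ f pL = pL /\ f pR = pR.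

Definition quot (A : Type) (r : A -> A -> Prop) : Type :=
  { P : A -> Prop | exists a, P = r a }.
Definition qcl {A : Type} (r : A -> A -> Prop) (a : A) : quot A r :=
  exist _ (r a) (ex_intro _ a eq_refl).
Definition qrep {A : Type} {r : A -> A -> Prop} (q : quot A r) : A :=
  proj1_sig (constructive_indefinite_description _ (proj2_sig q)).

Definition is_glb (E : R -> Prop) (m : R) : Prop :=
  (forall v, E v -> m <= v) /\ (forall b, (forall v, E v -> b <= v) -> b <= m).
Definition Rinf (E : R -> Prop) : R := epsilon (inhabits 0) (is_glb E).

(** The quotient (pseudo)metric: infimum of the lengths of chains
    p_0 ~ x, q_0 ~ p_1, ..., q_n ~ y, length = sum_i d(p_i,q_i). *)
Definition chain_sums {A : Type} (d : A -> A -> R) (r : A -> A -> Prop)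
  (P Q : A -> Prop) : R -> Prop :=
  fun v => exists (n : nat) (p q : nat -> A),
    P (p 0%nat) /\ Q (q n) /\ (forall i, (i < n)%nat -> r (q i) (p (S i))) /\
    v = sum_f_R0 (fun i => d (p i) (q i)) n.
Definition qdist {A : Type} (d : A -> A -> R) (r : A -> A -> Prop)
  (x y : quot A r) : R :=
  Rinf (chain_sums d r (proj1_sig x) (proj1_sig y)).

Inductive glue (X : pre3) : Mlab * car X -> Mlab * car X -> Prop :=
| glue1 : glue X (mb, pT) (ma, pL)
| glue2 : glue X (ma, pR) (mc, pT)
| glue3 : glue X (mc, pL) (mb, pR).
Definition geq (X : pre3) := clos_refl_sym_trans _ (glue X).

Definition dprod (X : pre3) (u v : Mlab * car X) : R :=
  if Mlab_eqb (fst u) (fst v) then dist (snd u) (snd v) / 2 else 1.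

Definition Mtensor (X : pre3) : pre3 :=
  {| car := quot (Mlab * car X) (geq X);
     dist := qdist (dprod X) (geq X);
     pT := qcl (geq X) (ma, pT);
     pL := qcl (geq X) (mb, pL);
     pR := qcl (geq X) (mc, pR) |}.

Definition Mtmap (X Y : pre3) (f : car X -> car Y) (q : car (Mtensor X))
  : car (Mtensor Y) :=
  qcl (geq Y) (fst (qrep q), f (snd (qrep q))).

Inductive Ipt : Type := iT | iL | iR.
Definition Ipt_eqb (x y : Ipt) : bool :=
  match x, y with iT, iT | iL, iL | iR, iR => true | _, _ => false end.
Definition I3 : pre3 := Pre3 Ipt (fun x y => if Ipt_eqb x y then 0 else 1) iT iL iR.

Definition bang (x : Ipt) : car (Mtensor I3) :=
  match x with
  | iT => qcl (geq I3) (ma, iT)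
  | iL => qcl (geq I3) (mb, iL)
  | iR => qcl (geq I3) (mc, iR)
  end.

Fixpoint Fiter (n : nat) : pre3 :=
  match n with 0 => I3 | S k => Mtensor (Fiter k) end.

Fixpoint emb (n : nat) : car (Fiter n) -> car (Fiter (S n)) :=
  match n with
  | 0 => bang
  | S k => Mtmap (Fiter k) (Fiter (S k)) (emb k)
  end.

Fixpoint lift (k n : nat) : car (Fiter n) -> car (Fiter (k + n)) :=
  match k with
  | 0 => fun x => x
  | S j => fun x => emb (j + n) (lift j n x)
  end.

Inductive Gstep : {n : nat & car (Fiter n)} -> {n : nat & car (Fiter n)} -> Prop :=
| gstep n x : Gstep (existT _ n x) (existT _ (S n) (emb n x)).
Definition Geq := clos_refl_sym_trans _ Gstep.

Definition Gdist_raw (u v : {n : nat & car (Fiter n)}) : R :=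
  let (n, x) := u in let (m, y) := v in
  dist (lift m n x)
       (eq_rect _ (fun k => car (Fiter k)) (lift n m y) _ (Nat.add_comm n m)).

Definition G : pre3 :=
  {| car := quot {n : nat & car (Fiter n)} Geq;
     dist := fun a b => Gdist_raw (qrep a) (qrep b);
     pT := qcl Geq (existT _ 0%nat iT);
     pL := qcl Geq (existT _ 0%nat iL);
     pR := qcl Geq (existT _ 0%nat iR) |}.

Definition gmap (q : car (Mtensor G)) : car G :=
  let (m, w) := qrep q in
  let (n, x) := qrep w in
  qcl Geq (existT (fun k => car (Fiter k)) (S n) (qcl (geq (Fiter n)) (m, x))).

Lemma glb_exists (E : R -> Prop) :
  (exists v, E v) -> (forall v, E v -> 0 <= v) -> exists m, is_glb E m.
Proof.
  intros [v0 Hv0] Hpos.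
  destruct (completeness (fun w => E (- w))) as [l [Hl1 Hl2]].
  - exists 0. intros w Hw. specialize (Hpos _ Hw). lra.
  - exists (- v0). rewrite Ropp_involutive. exact Hv0.
  - exists (- l). split.
    + intros v Hv. assert (- v <= l). { apply Hl1. rewrite Ropp_involutive. exact Hv. } lra.
    + intros b Hb. assert (l <= - b). { apply Hl2. intros w Hw. specialize (Hb _ Hw). lra. } lra.
Qed.

Lemma Rinf_spec (E : R -> Prop) : (exists m, is_glb E m) -> is_glb E (Rinf E).
Proof. intros H. unfold Rinf. apply epsilon_spec. exact H. Qed.

Lemma qcl_self {A} (r : A -> A -> Prop) (P : quot A r) :
  (forall a, r a a) -> exists a, proj1_sig P a.
Proof. destruct P as [P [a Ha]]. intros Hr. exists a. simpl. rewrite Ha. apply Hr. Qed.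

Lemma Mtensor_basic (X : pre3) :
  (forall x y : car X, 0 <= dist x y) -> (forall x : car X, dist x x = 0) ->
  (forall x y : car (Mtensor X), 0 <= dist x y) /\ (forall x : car (Mtensor X), dist x x = 0).
Proof.
  intros Hpos Hself.
  assert (Hd : forall u v, 0 <= dprod X u v).
  { intros u v. unfold dprod. destruct (Mlab_eqb _ _).
    - specialize (Hpos (snd u) (snd v)). lra.
    - lra. }
  assert (Hr : forall a, geq X a a) by (intros a; apply rst_refl).
  assert (Hlow : forall P Q v, chain_sums (dprod X) (geq X) P Q v -> 0 <= v).
  { intros P Q v [n [p [q [_ [_ [_ ->]]]]]]. apply cond_pos_sum. intros; apply Hd. }
  split.
  - intros x y. simpl. unfold qdist.
    destruct (qcl_self _ x Hr) as [a Ha]. destruct (qcl_self _ y Hr) as [b Hb].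
    assert (Hex : exists m, is_glb (chain_sums (dprod X) (geq X) (proj1_sig x) (proj1_sig y)) m).
    { apply glb_exists.
      - exists (sum_f_R0 (fun i => dprod X ((fun _ => a) i) ((fun _ => b) i)) 0).
        exists 0%nat, (fun _ => a), (fun _ => b).
        split; [exact Ha|]. split; [exact Hb|]. split; [intros i Hi; lia|]. reflexivity.
      - intros v Hv. exact (Hlow _ _ _ Hv). }
    destruct (Rinf_spec _ Hex) as [_ H2]. apply H2. intros v Hv. exact (Hlow _ _ _ Hv).
  - intros x. simpl. unfold qdist.
    destruct (qcl_self _ x Hr) as [a Ha].
    assert (H0 : chain_sums (dprod X) (geq X) (proj1_sig x) (proj1_sig x) 0).
    { exists 0%nat, (fun _ => a), (fun _ => a).
      split; [exact Ha|]. split; [exact Ha|]. split; [intros i Hi; lia|].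
      simpl. unfold dprod. destruct a as [m xa]; destruct m; simpl; rewrite Hself; lra. }
    assert (Hex : exists m, is_glb (chain_sums (dprod X) (geq X) (proj1_sig x) (proj1_sig x)) m).
    { exists 0. split.
      - intros v Hv. exact (Hlow _ _ _ Hv).
      - intros b Hb. apply Hb. exact H0. }
    destruct (Rinf_spec _ Hex) as [H1 H2].
    apply Rle_antisym.
    + apply H1. exact H0.
    + apply H2. intros v Hv. exact (Hlow _ _ _ Hv).
Qed.

Lemma Fiter_basic (n : nat) :
  (forall x y : car (Fiter n), 0 <= dist x y) /\ (forall x : car (Fiter n), dist x x = 0).
Proof.
  induction n as [|n [IH1 IH2]].
  - split.
    + intros x y. simpl. destruct (Ipt_eqb x y); lra.
    + intros x. destruct x; simpl; reflexivity.
  - apply Mtensor_basic; assumption.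
Qed.

Lemma G_self (w : car G) : dist w w = 0.
Proof.
  simpl. destruct (qrep w) as [n x]. unfold Gdist_raw.
  generalize (Nat.add_comm n n). intro E. rewrite (UIP_refl_nat _ E). simpl.
  apply (proj2 (Fiter_basic (n + n))).
Qed.

Definition cauchy {A : Type} (d : A -> A -> R) (u : nat -> A) : Prop :=
  forall eps, 0 < eps -> exists N : nat, forall m n : nat,
    (N <= m)%nat -> (N <= n)%nat -> d (u m) (u n) < eps.

Definition CSeq : Type := { u : nat -> car G | cauchy (@dist G) u }.
Definition Srel (u v : CSeq) : Prop :=
  Un_cv (fun k => dist (proj1_sig u k) (proj1_sig v k)) 0.
Definition Rlim (u : nat -> R) : R := epsilon (inhabits 0) (Un_cv u).

Lemma const_cauchy (w : car G) : cauchy (@dist G) (fun _ => w).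
Proof. intros eps Heps. exists 0%nat. intros m n _ _. rewrite G_self. exact Heps. Qed.

Definition constG (w : car G) : CSeq := exist _ (fun _ => w) (const_cauchy w).

Definition S3 : pre3 :=
  {| car := quot CSeq Srel;
     dist := fun a b => Rlim (fun k => dist (proj1_sig (qrep a) k) (proj1_sig (qrep b) k));
     pT := qcl Srel (constG pT);
     pL := qcl Srel (constG pL);
     pR := qcl Srel (constG pR) |}.

Definition embS (w : car G) : car S3 := qcl Srel (constG w).

(** psi : M (x) S -> S, the completion of g:
    psi(m (x) [u_k]) = [g(m (x) u_k)]; here as its graph. *)
Definition psi_rel (p : car (Mtensor S3)) (t : car S3) : Prop :=
  let (m, sg) := qrep p in
  Un_cv (fun k => dist (gmap (qcl (geq G) (m, proj1_sig (qrep sg) k)))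
                       (proj1_sig (qrep t) k)) 0.

(** s = psi^{-1} *)
Definition sinv (t : car S3) : car (Mtensor S3) :=
  epsilon (inhabits (@pT (Mtensor S3))) (fun p => psi_rel p t).

Fixpoint traj (X : pre3) (e : car X -> car (Mtensor X)) (x : car X) (n : nat) : car X :=
  match n with 0 => x | S k => snd (qrep (e (traj X e x k))) end.
Definition lab (X : pre3) (e : car X -> car (Mtensor X)) (x : car X) (n : nat) : Mlab :=
  fst (qrep (e (traj X e x n))).

Fixpoint word (z : Ipt) (ms : nat -> Mlab) (n : nat) : car (Fiter n) :=
  match n with
  | 0 => z
  | S k => qcl (geq (Fiter k)) (ms 0%nat, word z (fun i => ms (S i)) k)
  end.

Definition theta (X : pre3) (e : car X -> car (Mtensor X)) (z : Ipt) (n : nat)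
  (x : car X) : car S3 :=
  embS (qcl Geq (existT (fun k => car (Fiter k)) n (word z (lab X e x) n))).

(* Main.v *)
Require Import Defs.
From Stdlib Require Import Reals Lra Lia Relations ClassicalEpsilon Eqdep_dec Arith.
From Stdlib Require Import FunctionalExtensionality PropExtensionality ProofIrrelevance Classical.
Import Defs.
Open Scope R_scope.

Open Scope R_scope.

Lemma qrep_spec {A : Type} {r : A -> A -> Prop} (q : quot A r) : proj1_sig q = r (qrep q).
Proof.
  unfold qrep. destruct (constructive_indefinite_description _ _) as [a Ha]. simpl. exact Ha.
Qed.

Lemma qcl_qrep {A : Type} {r : A -> A -> Prop} (q : quot A r) : qcl r (qrep q) = q.
Proof.
  pose proof (qrep_spec q) as H. destruct q as [P HP]. simpl in H.
  set (a := qrep (exist _ P HP)) in *. clearbody a. unfold qcl. subst P. f_equal. apply proof_irrelevance.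
Qed.

Definition equivR {A : Type} (r : A -> A -> Prop) : Prop :=
  (forall a, r a a) /\ (forall a b, r a b -> r b a) /\ (forall a b c, r a b -> r b c -> r a c).

Lemma qcl_eq {A : Type} (r : A -> A -> Prop) (a b : A) :
  equivR r -> r a b -> qcl r a = qcl r b.
Proof.
  intros [Hr [Hs Ht]] Hab. unfold qcl.
  assert (E : r a = r b).
  { apply functional_extensionality. intro x. apply propositional_extensionality.
    split; intro H; eauto. }
  revert Hab. generalize (ex_intro (fun a0 => r a = r a0) a eq_refl).
  generalize (ex_intro (fun a0 => r b = r a0) b eq_refl). rewrite E. intros. f_equal.
  apply proof_irrelevance.
Qed.

Lemma qcl_inj {A : Type} (r : A -> A -> Prop) (a b : A) :
  (forall x, r x x) -> qcl r a = qcl r b -> r a b.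
Proof.
  intros Hr H. apply (f_equal (@proj1_sig _ _)) in H. simpl in H. rewrite H. apply Hr.
Qed.

Lemma qrep_qcl {A : Type} (r : A -> A -> Prop) (a : A) :
  (forall x, r x x) -> r a (qrep (qcl r a)).
Proof.
  intros Hr. pose proof (qrep_spec (qcl r a)) as H. simpl in H. rewrite H. apply Hr.
Qed.

Lemma equiv_rst {A : Type} (R0 : A -> A -> Prop) : equivR (clos_refl_sym_trans A R0).
Proof.
  split; [|split].
  - intro; apply rst_refl.
  - intros; apply rst_sym; auto.
  - intros; eapply rst_trans; eauto.
Qed.

Lemma rst_inv {A B : Type} (R0 : A -> A -> Prop) (f : A -> B) :
  (forall u v, R0 u v -> f u = f v) -> forall u v, clos_refl_sym_trans A R0 u v -> f u = f v.
Proof.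
  intros H u v Huv. induction Huv; auto. congruence.
Qed.

Record pm (Y : pre3) : Prop := mkpm {
  pm_pos : forall x y : car Y, 0 <= dist x y;
  pm_self : forall x : car Y, dist x x = 0;
  pm_sym : forall x y : car Y, dist x y = dist y x;
  pm_tri : forall x y z : car Y, dist x z <= dist x y + dist y z;
  pm_le1 : forall x y : car Y, dist x y <= 1;
  pm_TL : dist (@pT Y) (@pL Y) = 1;
  pm_LR : dist (@pL Y) (@pR Y) = 1;
  pm_TR : dist (@pT Y) (@pR Y) = 1 }.

Definition corner {A : Type} (cT cL cR : A) (m m' : Mlab) : A :=
  match m, m' with
  | ma, mb => cL | mb, ma => cT | ma, mc => cR | mc, ma => cT | mb, mc => cR | mc, mb => cL
  | ma, ma => cT | mb, mb => cL | mc, mc => cR end.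

Definition third (m m' : Mlab) : Mlab :=
  match m, m' with
  | ma, mb | mb, ma => mc | ma, mc | mc, ma => mb | _, _ => ma end.

Definition Dform {A : Type} (d : A -> A -> R) (cT cL cR : A) (u v : Mlab * A) : R :=
  if Mlab_eqb (fst u) (fst v) then d (snd u) (snd v) / 2
  else Rmin ((d (snd u) (corner cT cL cR (fst u) (fst v)) + d (snd v) (corner cT cL cR (fst v) (fst u))) / 2)
            ((d (snd u) (corner cT cL cR (fst u) (third (fst u) (fst v))) + 1
              + d (snd v) (corner cT cL cR (fst v) (third (fst u) (fst v)))) / 2).

Definition DY (Y : pre3) := Dform (@dist Y) (@pT Y) (@pL Y) (@pR Y).

Lemma Mlab_eqb_true m m' : Mlab_eqb m m' = true -> m = m'.
Proof. destruct m, m'; simpl; congruence. Qed.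
Lemma Mlab_eqb_refl m : Mlab_eqb m m = true.
Proof. destruct m; reflexivity. Qed.
Lemma Mlab_eqb_false m m' : Mlab_eqb m m' = false -> m <> m'.
Proof. destruct m, m'; simpl; congruence. Qed.

Lemma Rmin_lip a b a' b' k : a <= a' + k -> b <= b' + k -> Rmin a b <= Rmin a' b' + k.
Proof. unfold Rmin; destruct (Rle_dec a b); destruct (Rle_dec a' b'); lra. Qed.

Lemma Rmin_ge a b c : c <= a -> c <= b -> c <= Rmin a b.
Proof. unfold Rmin; destruct (Rle_dec a b); lra. Qed.

Ltac pmf H x :=
  pose proof (pm_pos _ H x pT); pose proof (pm_pos _ H x pL); pose proof (pm_pos _ H x pR);
  pose proof (pm_le1 _ H x pT); pose proof (pm_le1 _ H x pL); pose proof (pm_le1 _ H x pR).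
Ltac pmc H :=
  pose proof (pm_TL _ H); pose proof (pm_LR _ H); pose proof (pm_TR _ H);
  pose proof (pm_sym _ H pT pL); pose proof (pm_sym _ H pL pR); pose proof (pm_sym _ H pT pR);
  pose proof (pm_self _ H pT); pose proof (pm_self _ H pL); pose proof (pm_self _ H pR).
Ltac rmin := unfold Rmin in *; repeat match goal with |- context [Rle_dec ?a ?b] => destruct (Rle_dec a b) end.

Lemma Dform_nonneg Y (H : pm Y) u v : 0 <= DY Y u v.
Proof.
  destruct u as [m x], v as [m' y]. unfold DY, Dform; simpl.
  destruct (Mlab_eqb m m').
  - pose proof (pm_pos _ H x y); lra.
  - apply Rmin_ge; pose proof (pm_pos _ H x (corner pT pL pR m m'));
    pose proof (pm_pos _ H y (corner pT pL pR m' m));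
    pose proof (pm_pos _ H x (corner pT pL pR m (third m m')));
    pose proof (pm_pos _ H y (corner pT pL pR m' (third m m'))); lra.
Qed.

Lemma Dform_le1 Y (H : pm Y) u v : DY Y u v <= 1.
Proof.
  destruct u as [m x], v as [m' y]. unfold DY, Dform; simpl.
  destruct (Mlab_eqb m m').
  - pose proof (pm_le1 _ H x y); pose proof (pm_pos _ H x y); lra.
  - pose proof (Rmin_l ((dist x (corner pT pL pR m m') + dist y (corner pT pL pR m' m)) / 2)
      ((dist x (corner pT pL pR m (third m m')) + 1 + dist y (corner pT pL pR m' (third m m'))) / 2)).
    pose proof (pm_le1 _ H x (corner pT pL pR m m'));
    pose proof (pm_le1 _ H y (corner pT pL pR m' m)); lra.
Qed.

Lemma Dform_self Y (H : pm Y) u : DY Y u u = 0.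
Proof.
  destruct u as [m x]. unfold DY, Dform; simpl. rewrite Mlab_eqb_refl. rewrite (pm_self _ H). lra.
Qed.

Lemma Dlip Y (H : pm Y) m0 x0 m y y' :
  DY Y (m0, x0) (m, y) <= DY Y (m0, x0) (m, y') + dist y' y / 2.
Proof.
  unfold DY, Dform; simpl. destruct (Mlab_eqb m0 m).
  - pose proof (pm_tri _ H x0 y' y); lra.
  - apply Rmin_lip.
    + pose proof (pm_tri _ H y y' (corner pT pL pR m m0)); pose proof (pm_sym _ H y y'); lra.
    + pose proof (pm_tri _ H y y' (corner pT pL pR m (third m0 m))); pose proof (pm_sym _ H y y'); lra.
Qed.

Lemma Dglue Y (H : pm Y) w u v : glue Y u v -> DY Y w u = DY Y w v.
Proof.
  destruct w as [m0 x0]. pmf H x0. pmc H.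
  intros Hg; destruct Hg; destruct m0; unfold DY, Dform; simpl; rmin; lra.
Qed.

Lemma Dform_sym Y (H : pm Y) u v : DY Y u v = DY Y v u.
Proof.
  destruct u as [m x], v as [m' y].
  pose proof (pm_sym _ H x y).
  destruct m, m'; unfold DY, Dform; simpl; rmin; lra.
Qed.

Lemma chain_lb {A : Type} (d : A -> A -> R) (r : A -> A -> Prop) (Phi : A -> R) a b v :
  (forall x y, r x y -> Phi x = Phi y) -> (forall x y, Phi y <= Phi x + d x y) ->
  chain_sums d r (r a) (r b) v -> Phi b - Phi a <= v.
Proof.
  intros Hinv Hlip [n [p [q [Hp [Hq [Hc Hv]]]]]]. subst v.
  assert (K : forall k, (k <= n)%nat -> Phi (q k) - Phi (p 0%nat) <= sum_f_R0 (fun i => d (p i) (q i)) k).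
  { induction k; intros Hk; simpl.
    - pose proof (Hlip (p 0%nat) (q 0%nat)); lra.
    - assert (Hk' : (k < n)%nat) by lia.
      pose proof (Hinv _ _ (Hc k Hk')). pose proof (Hlip (p (S k)) (q (S k))).
      pose proof (IHk ltac:(lia)). lra. }
  pose proof (K n (le_n n)). rewrite (Hinv _ _ Hp). rewrite (Hinv _ _ Hq). lra.
Qed.

Lemma qdist_glb {A : Type} (d : A -> A -> R) (r : A -> A -> Prop) a b :
  (forall x y, 0 <= d x y) -> (forall x, r x x) ->
  is_glb (chain_sums d r (r a) (r b)) (qdist d r (qcl r a) (qcl r b)).
Proof.
  intros Hpos Hr. unfold qdist. simpl. apply Rinf_spec. apply glb_exists.
  - exists (sum_f_R0 (fun i => d ((fun _ => a) i) ((fun _ => b) i)) 0).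
    exists 0%nat, (fun _ => a), (fun _ => b). split; [apply Hr|]. split; [apply Hr|].
    split; [intros; lia|reflexivity].
  - intros v [n [p [q [_ [_ [_ ->]]]]]]. apply cond_pos_sum. intros; apply Hpos.
Qed.

Lemma third_neq1 m m' : m <> m' -> third m m' <> m.
Proof. destruct m, m'; simpl; congruence. Qed.
Lemma third_neq2 m m' : m <> m' -> third m m' <> m'.
Proof. destruct m, m'; simpl; congruence. Qed.

Lemma glue_corner (Y : pre3) m m' : m <> m' ->
  geq Y (m, corner pT pL pR m m') (m', corner pT pL pR m' m).
Proof.
  intros Hne; destruct m, m'; simpl; try congruence; unfold geq.
  - apply rst_sym, rst_step, glue1.
  - apply rst_step, glue2.
  - apply rst_step, glue1.
  - apply rst_sym, rst_step, glue3.
  - apply rst_sym, rst_step, glue2.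
  - apply rst_step, glue3.
Qed.

Lemma corner_third_dist Y (H : pm Y) m m' : m <> m' ->
  @dist Y (corner pT pL pR (third m m') m) (corner pT pL pR (third m m') m') = 1.
Proof. pmc H. destruct m, m'; simpl; intros; try congruence; lra. Qed.

Lemma dprod_nonneg Y (H : pm Y) u v : 0 <= dprod Y u v.
Proof. unfold dprod. destruct (Mlab_eqb _ _); [pose proof (pm_pos _ H (snd u) (snd v)); lra | lra]. Qed.

Lemma MT_ub Y (H : pm Y) u v :
  @dist (Mtensor Y) (qcl (geq Y) u) (qcl (geq Y) v) <= DY Y u v.
Proof.
  destruct (qdist_glb (dprod Y) (geq Y) u v (dprod_nonneg Y H) (fun x => rst_refl _ _ x)) as [G1 _].
  simpl. destruct u as [m x], v as [m' y]. unfold DY, Dform; simpl.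
  destruct (Mlab_eqb m m') eqn:E.
  - apply G1. exists 0%nat, (fun _ => (m, x)), (fun _ => (m', y)).
    split; [apply rst_refl|]. split; [apply rst_refl|]. split; [intros; lia|].
    simpl. unfold dprod. simpl. rewrite E. reflexivity.
  - apply Mlab_eqb_false in E.
    set (k := third m m').
    unfold Rmin; destruct (Rle_dec _ _); apply G1.
    + exists 1%nat, (fun i => match i with 0%nat => (m, x) | _ => (m', corner (@pT Y) pL pR m' m) end),
        (fun i => match i with 0%nat => (m, corner (@pT Y) pL pR m m') | _ => (m', y) end).
      split; [apply rst_refl|]. split; [apply rst_refl|].
      split; [intros i Hi; assert (i = 0%nat) by lia; subst; apply glue_corner; auto|].
      simpl. unfold dprod; simpl. rewrite !Mlab_eqb_refl. rewrite (pm_sym _ H (corner _ _ _ m' m) y). lra.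
    + exists 2%nat, (fun i => match i with 0%nat => (m, x) | 1%nat => (k, corner (@pT Y) pL pR k m)
                                       | _ => (m', corner (@pT Y) pL pR m' k) end),
        (fun i => match i with 0%nat => (m, corner (@pT Y) pL pR m k) | 1%nat => (k, corner (@pT Y) pL pR k m')
                                       | _ => (m', y) end).
      split; [apply rst_refl|]. split; [apply rst_refl|].
      split.
      * intros i Hi. destruct i as [|[|i]]; try lia.
        -- apply glue_corner. apply not_eq_sym, third_neq1; auto.
        -- apply glue_corner. apply third_neq2; auto.
      * simpl. unfold dprod; simpl. rewrite !Mlab_eqb_refl.
        pose proof (corner_third_dist Y H m m' E) as Ck. fold k in Ck. rewrite Ck. rewrite (pm_sym _ H (corner _ _ _ m' k) y).
        unfold k. lra.
Qed.

Lemma MT_lb Y (H : pm Y) w u v :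
  DY Y w v - DY Y w u <= @dist (Mtensor Y) (qcl (geq Y) u) (qcl (geq Y) v).
Proof.
  destruct (qdist_glb (dprod Y) (geq Y) u v (dprod_nonneg Y H) (fun x => rst_refl _ _ x)) as [_ G2].
  simpl. apply G2. intros s Hs. apply (chain_lb (dprod Y) (geq Y) (DY Y w) u v s); auto.
  - intros a b Hab. apply (rst_inv (glue Y) (DY Y w)); auto. intros; apply Dglue; auto.
  - intros [m1 y1] [m2 y2]. unfold dprod; simpl. destruct (Mlab_eqb m1 m2) eqn:E.
    + apply Mlab_eqb_true in E; subst. destruct w. apply Dlip; auto.
    + pose proof (Dform_le1 Y H w (m2, y2)). pose proof (Dform_nonneg Y H w (m1, y1)). lra.
Qed.

Theorem MT_dist Y (H : pm Y) u v :
  @dist (Mtensor Y) (qcl (geq Y) u) (qcl (geq Y) v) = DY Y u v.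
Proof.
  apply Rle_antisym; [apply MT_ub; auto|].
  pose proof (MT_lb Y H u u v). rewrite Dform_self in H0; auto. lra.
Qed.

Lemma MT_tri Y (H : pm Y) u v w : DY Y u w <= DY Y u v + DY Y v w.
Proof. pose proof (MT_lb Y H u v w). rewrite MT_dist in H0; auto. lra. Qed.

Lemma qcl_ind1 {A : Type} {r : A -> A -> Prop} (P : quot A r -> Prop) :
  (forall a, P (qcl r a)) -> forall q, P q.
Proof. intros H q. rewrite <- (qcl_qrep q). apply H. Qed.

Theorem MT_pm Y : pm Y -> pm (Mtensor Y).
Proof.
  intros H. constructor.
  - intros x y. rewrite <- (qcl_qrep x), <- (qcl_qrep y). rewrite MT_dist; auto. apply Dform_nonneg; auto.
  - intros x. rewrite <- (qcl_qrep x). rewrite MT_dist; auto. apply Dform_self; auto.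
  - intros x y. rewrite <- (qcl_qrep x), <- (qcl_qrep y). rewrite !MT_dist; auto. apply Dform_sym; auto.
  - intros x y z. rewrite <- (qcl_qrep x), <- (qcl_qrep y), <- (qcl_qrep z). rewrite !MT_dist; auto.
    apply MT_tri; auto.
  - intros x y. rewrite <- (qcl_qrep x), <- (qcl_qrep y). rewrite MT_dist; auto. apply Dform_le1; auto.
  - simpl pT; simpl pL. rewrite MT_dist; auto. pmc H. unfold DY, Dform; simpl. rmin; lra.
  - simpl pR; simpl pL. rewrite MT_dist; auto. pmc H. unfold DY, Dform; simpl. rmin; lra.
  - simpl pT; simpl pR. rewrite MT_dist; auto. pmc H. unfold DY, Dform; simpl. rmin; lra.
Qed.

Open Scope R_scope.

Lemma geq_map (Y Y' : pre3) (h : car Y -> car Y') :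
  h pT = pT -> h pL = pL -> h pR = pR ->
  forall u v, geq Y u v -> geq Y' (fst u, h (snd u)) (fst v, h (snd v)).
Proof.
  intros Ht Hl Hr u v Huv. induction Huv.
  - destruct H; simpl; rewrite ?Ht, ?Hl, ?Hr; apply rst_step; constructor.
  - apply rst_refl.
  - apply rst_sym; auto.
  - eapply rst_trans; eauto.
Qed.

Lemma Mtmap_qcl (Y Y' : pre3) (h : car Y -> car Y') :
  h pT = pT -> h pL = pL -> h pR = pR ->
  forall m x, Mtmap Y Y' h (qcl (geq Y) (m, x)) = qcl (geq Y') (m, h x).
Proof.
  intros Ht Hl Hr m x. unfold Mtmap.
  pose proof (qrep_qcl (geq Y) (m, x) (fun a => rst_refl _ _ a)) as Hq.
  destruct (qrep (qcl (geq Y) (m, x))) as [m' x']. simpl.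
  symmetry. apply qcl_eq. apply equiv_rst.
  apply (geq_map Y Y' h Ht Hl Hr (m, x) (m', x') Hq).
Qed.

Lemma I3_pm : pm I3.
Proof.
  constructor; simpl.
  - intros [] []; simpl; lra.
  - intros []; simpl; lra.
  - intros [] []; simpl; lra.
  - intros [] [] []; simpl; lra.
  - intros [] []; simpl; lra.
  - lra. - lra. - lra.
Qed.

Lemma Fiter_pm n : pm (Fiter n).
Proof. induction n; [apply I3_pm | simpl; apply MT_pm; auto]. Qed.

Lemma corner_map {A B : Type} (h : A -> B) cT cL cR m m' :
  corner (h cT) (h cL) (h cR) m m' = h (corner cT cL cR m m').
Proof. destruct m, m'; reflexivity. Qed.

Lemma Dform_map {A B : Type} (d : A -> A -> R) (d' : B -> B -> R) (h : A -> B) cT cL cR m x m' y :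
  (forall a b, d' (h a) (h b) = d a b) ->
  Dform d' (h cT) (h cL) (h cR) (m, h x) (m', h y) = Dform d cT cL cR (m, x) (m', y).
Proof.
  intros Hd. unfold Dform; simpl. rewrite !corner_map, !Hd. reflexivity.
Qed.

Lemma I3d (a b : Ipt) : @dist (Fiter 0) a b = if Ipt_eqb a b then 0 else 1.
Proof. reflexivity. Qed.

Lemma emb_props n :
  (emb n pT = pT /\ emb n pL = pL /\ emb n pR = pR) /\
  (forall x y, dist (emb n x) (emb n y) = dist x y).
Proof.
  induction n as [|n [[Ht [Hl Hr]] Hd]].
  - split; [split; [|split]; reflexivity|].
    pose proof (Fiter_pm 1) as H. pmc H.
    intros [] []; rewrite I3d; cbn [Ipt_eqb];
      change (emb 0 iT) with (@pT (Fiter 1));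
      change (emb 0 iL) with (@pL (Fiter 1));
      change (emb 0 iR) with (@pR (Fiter 1)); lra.
  - split; [split; [|split]|].
    + change (Mtmap (Fiter n) (Fiter (S n)) (emb n) (qcl (geq (Fiter n)) (ma, pT)) = qcl (geq (Fiter (S n))) (ma, pT)).
      rewrite (Mtmap_qcl (Fiter n) (Fiter (S n)) (emb n) Ht Hl Hr). rewrite Ht. reflexivity.
    + change (Mtmap (Fiter n) (Fiter (S n)) (emb n) (qcl (geq (Fiter n)) (mb, pL)) = qcl (geq (Fiter (S n))) (mb, pL)).
      rewrite (Mtmap_qcl (Fiter n) (Fiter (S n)) (emb n) Ht Hl Hr). rewrite Hl. reflexivity.
    + change (Mtmap (Fiter n) (Fiter (S n)) (emb n) (qcl (geq (Fiter n)) (mc, pR)) = qcl (geq (Fiter (S n))) (mc, pR)).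
      rewrite (Mtmap_qcl (Fiter n) (Fiter (S n)) (emb n) Ht Hl Hr). rewrite Hr. reflexivity.
    + intros x y. simpl emb.
      rewrite <- (qcl_qrep x), <- (qcl_qrep y).
      destruct (qrep x) as [m a], (qrep y) as [m' b].
      rewrite !(Mtmap_qcl (Fiter n) (Fiter (S n)) (emb n) Ht Hl Hr).
      assert (E1 : @dist (Fiter (S n)) (qcl (geq (Fiter n)) (m,a)) (qcl (geq (Fiter n)) (m',b))
                   = DY (Fiter n) (m,a) (m',b)) by exact (MT_dist (Fiter n) (Fiter_pm n) _ _).
      assert (E2 : @dist (Fiter (S (S n))) (qcl (geq (Fiter (S n))) (m, emb n a))
                     (qcl (geq (Fiter (S n))) (m', emb n b))
                   = DY (Fiter (S n)) (m, emb n a) (m', emb n b))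
        by exact (MT_dist (Fiter (S n)) (Fiter_pm (S n)) _ _).
      transitivity (DY (Fiter (S n)) (m, emb n a) (m', emb n b)); [exact E2|].
      transitivity (DY (Fiter n) (m,a) (m',b)); [|symmetry; exact E1].
      unfold DY. rewrite <- Ht, <- Hl, <- Hr at 1.
      apply Dform_map. exact Hd.
Qed.

Open Scope R_scope.
Open Scope nat_scope.

Definition cast {N N' : nat} (E : N = N') (z : car (Fiter N)) : car (Fiter N') :=
  eq_rect N (fun k => car (Fiter k)) z N' E.

Lemma cast_irr N N' (E E' : N = N') z : cast E z = cast E' z.
Proof. rewrite (UIP_dec Nat.eq_dec E E'). reflexivity. Qed.
Lemma cast_refl N (E : N = N) z : cast E z = z.
Proof. rewrite (UIP_dec Nat.eq_dec E eq_refl). reflexivity. Qed.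
Lemma cast_cast N1 N2 N3 (E : N1 = N2) (E' : N2 = N3) z : cast E' (cast E z) = cast (eq_trans E E') z.
Proof. destruct E'. destruct E. reflexivity. Qed.
Lemma emb_cast N N' (E : N = N') z : emb N' (cast E z) = cast (f_equal S E) (emb N z).
Proof. destruct E. reflexivity. Qed.
Lemma dist_cast N N' (E : N = N') a b : dist (cast E a) (cast E b) = dist a b.
Proof. destruct E. reflexivity. Qed.
Lemma dist_cast2 N N' (E : N = N') a b : @dist (Fiter N') a (cast E b) = dist (cast (eq_sym E) a) b.
Proof. destruct E. reflexivity. Qed.
Lemma cast_pT N N' (E : N = N') : cast E pT = pT.
Proof. destruct E. reflexivity. Qed.
Lemma cast_pL N N' (E : N = N') : cast E pL = pL.
Proof. destruct E. reflexivity. Qed.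
Lemma cast_pR N N' (E : N = N') : cast E pR = pR.
Proof. destruct E. reflexivity. Qed.

Notation Gpt n x := (existT (fun k => car (Fiter k)) n x).

Lemma sig_cast N N' (E : N = N') z : Gpt N' (cast E z) = Gpt N z.
Proof. destruct E. reflexivity. Qed.

Lemma emb_iso n x y : dist (emb n x) (emb n y) = dist x y.
Proof. apply (proj2 (emb_props n)). Qed.
Lemma emb_T n : emb n pT = pT. Proof. apply (proj1 (emb_props n)). Qed.
Lemma emb_L n : emb n pL = pL. Proof. apply (proj1 (emb_props n)). Qed.
Lemma emb_R n : emb n pR = pR. Proof. apply (proj1 (emb_props n)). Qed.

Lemma lift_iso k n x y : dist (lift k n x) (lift k n y) = dist x y.
Proof. induction k; [reflexivity|]. change (dist (emb (k + n) (lift k n x)) (emb (k + n) (lift k n y)) = dist x y). rewrite emb_iso. apply IHk. Qed.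
Lemma lift_T k n : lift k n pT = pT.
Proof. induction k; [reflexivity|]. change (emb (k + n) (lift k n pT) = pT). rewrite IHk. apply emb_T. Qed.
Lemma lift_L k n : lift k n pL = pL.
Proof. induction k; [reflexivity|]. change (emb (k + n) (lift k n pL) = pL). rewrite IHk. apply emb_L. Qed.
Lemma lift_R k n : lift k n pR = pR.
Proof. induction k; [reflexivity|]. change (emb (k + n) (lift k n pR) = pR). rewrite IHk. apply emb_R. Qed.

Lemma lift_emb m n x (E : S (m + n) = m + S n) :
  lift m (S n) (emb n x) = cast E (emb (m + n) (lift m n x)).
Proof.
  revert E. induction m; intros E.
  - simpl. rewrite cast_refl. reflexivity.
  - change (lift (S m) (S n) (emb n x)) with (emb (m + S n) (lift m (S n) (emb n x))).
    change (lift (S m) n x) with (emb (m + n) (lift m n x)).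
    rewrite (IHm (plus_n_Sm m n)). rewrite emb_cast. apply cast_irr.
Qed.

Lemma GR_unfold n x m y :
  Gdist_raw (Gpt n x) (Gpt m y) = dist (lift m n x) (cast (Nat.add_comm n m) (lift n m y)).
Proof. reflexivity. Qed.

Lemma GR1 n x m y : Gdist_raw (Gpt n x) (Gpt m y) = Gdist_raw (Gpt (S n) (emb n x)) (Gpt m y).
Proof.
  rewrite !GR_unfold.
  rewrite (lift_emb m n x (plus_n_Sm m n)).
  change (lift (S n) m y) with (emb (n + m) (lift n m y)).
  assert (A : cast (Nat.add_comm (S n) m) (emb (n + m) (lift n m y)) =
              cast (plus_n_Sm m n) (emb (m + n) (cast (Nat.add_comm n m) (lift n m y)))).
  { rewrite emb_cast, cast_cast. apply cast_irr. }
  rewrite A, dist_cast, emb_iso. reflexivity.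
Qed.

Lemma GR_sym u v : Gdist_raw u v = Gdist_raw v u.
Proof.
  destruct u as [n x], v as [m y]. rewrite !GR_unfold.
  rewrite (dist_cast2 _ _ (Nat.add_comm n m)). rewrite (pm_sym _ (Fiter_pm (n+m)) (cast _ _)).
  f_equal. apply cast_irr.
Qed.

Lemma GR_inv_l u u' v : Geq u u' -> Gdist_raw u v = Gdist_raw u' v.
Proof.
  intros H. apply (rst_inv Gstep (fun w => Gdist_raw w v)); auto.
  intros a b Hab. destruct Hab. destruct v. apply GR1.
Qed.

Lemma GR_inv u u' v v' : Geq u u' -> Geq v v' -> Gdist_raw u v = Gdist_raw u' v'.
Proof.
  intros H1 H2. rewrite (GR_inv_l u u' v H1). rewrite GR_sym, (GR_inv_l v v' u' H2). apply GR_sym.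
Qed.

Lemma GR3 n x y : Gdist_raw (Gpt n x) (Gpt n y) = dist x y.
Proof. rewrite GR_unfold, cast_refl. apply lift_iso. Qed.

Lemma Geq_lift k n x : Geq (Gpt n x) (Gpt (k + n) (lift k n x)).
Proof.
  induction k; simpl; [apply rst_refl|].
  eapply rst_trans; [apply IHk|]. apply rst_step. apply (gstep (k + n) (lift k n x)).
Qed.

Lemma Geq_up n x N : (n <= N)%nat -> exists z, Geq (Gpt n x) (Gpt N z).
Proof.
  intros H. assert (E : (N - n + n)%nat = N) by lia.
  exists (cast E (lift (N - n) n x)). rewrite sig_cast. apply Geq_lift.
Qed.

Definition Gcl n (x : car (Fiter n)) : car G := qcl Geq (Gpt n x).

Lemma Geq_equiv : equivR Geq.
Proof. apply equiv_rst. Qed.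

Lemma Gcl_rep (w : car G) : exists n x, w = Gcl n x.
Proof.
  rewrite <- (qcl_qrep w). destruct (qrep w) as [n x]. exists n, x. reflexivity.
Qed.

Lemma Gd_cl n x m y : @dist G (Gcl n x) (Gcl m y) = Gdist_raw (Gpt n x) (Gpt m y).
Proof.
  change (Gdist_raw (qrep (Gcl n x)) (qrep (Gcl m y)) = Gdist_raw (Gpt n x) (Gpt m y)).
  symmetry. unfold Gcl. apply GR_inv; apply qrep_qcl; intros; apply rst_refl.
Qed.

Lemma Gd_same N x y : @dist G (Gcl N x) (Gcl N y) = dist x y.
Proof. rewrite Gd_cl. apply GR3. Qed.

Lemma Gcl_up n x N : (n <= N)%nat -> exists z, Gcl n x = Gcl N z.
Proof.
  intros H. destruct (Geq_up n x N H) as [z Hz]. exists z. apply qcl_eq; auto. apply Geq_equiv.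
Qed.

Lemma G_common2 (w1 w2 : car G) : exists N x1 x2, w1 = Gcl N x1 /\ w2 = Gcl N x2.
Proof.
  destruct (Gcl_rep w1) as [n1 [x1 ->]]. destruct (Gcl_rep w2) as [n2 [x2 ->]].
  destruct (Gcl_up n1 x1 (n1 + n2) ltac:(lia)) as [z1 E1].
  destruct (Gcl_up n2 x2 (n1 + n2) ltac:(lia)) as [z2 E2].
  exists (n1 + n2)%nat, z1, z2. auto.
Qed.

Lemma G_common3 (w1 w2 w3 : car G) : exists N x1 x2 x3, w1 = Gcl N x1 /\ w2 = Gcl N x2 /\ w3 = Gcl N x3.
Proof.
  destruct (Gcl_rep w1) as [n1 [x1 ->]]. destruct (Gcl_rep w2) as [n2 [x2 ->]].
  destruct (Gcl_rep w3) as [n3 [x3 ->]].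
  destruct (Gcl_up n1 x1 (n1 + n2 + n3) ltac:(lia)) as [z1 E1].
  destruct (Gcl_up n2 x2 (n1 + n2 + n3) ltac:(lia)) as [z2 E2].
  destruct (Gcl_up n3 x3 (n1 + n2 + n3) ltac:(lia)) as [z3 E3].
  exists (n1 + n2 + n3)%nat, z1, z2, z3. auto.
Qed.

Lemma G_pT N : @pT G = Gcl N pT.
Proof.
  change (@pT G) with (Gcl 0 (@pT (Fiter 0))). apply qcl_eq; [apply Geq_equiv|].
  pose proof (Geq_lift N 0 pT) as H. rewrite lift_T in H.
  rewrite <- (sig_cast _ _ (Nat.add_0_r N)), cast_pT in H. exact H.
Qed.
Lemma G_pL N : @pL G = Gcl N pL.
Proof.
  change (@pL G) with (Gcl 0 (@pL (Fiter 0))). apply qcl_eq; [apply Geq_equiv|].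
  pose proof (Geq_lift N 0 pL) as H. rewrite lift_L in H.
  rewrite <- (sig_cast _ _ (Nat.add_0_r N)), cast_pL in H. exact H.
Qed.
Lemma G_pR N : @pR G = Gcl N pR.
Proof.
  change (@pR G) with (Gcl 0 (@pR (Fiter 0))). apply qcl_eq; [apply Geq_equiv|].
  pose proof (Geq_lift N 0 pR) as H. rewrite lift_R in H.
  rewrite <- (sig_cast _ _ (Nat.add_0_r N)), cast_pR in H. exact H.
Qed.

Lemma G_pm : pm G.
Proof.
  constructor.
  - intros x y. destruct (G_common2 x y) as [N [a [b [-> ->]]]]. rewrite Gd_same. apply (pm_pos _ (Fiter_pm N)).
  - intros x. apply G_self.
  - intros x y. destruct (G_common2 x y) as [N [a [b [-> ->]]]]. rewrite !Gd_same. apply (pm_sym _ (Fiter_pm N)).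
  - intros x y z. destruct (G_common3 x y z) as [N [a [b [c [-> [-> ->]]]]]]. rewrite !Gd_same.
    apply (pm_tri _ (Fiter_pm N)).
  - intros x y. destruct (G_common2 x y) as [N [a [b [-> ->]]]]. rewrite Gd_same. apply (pm_le1 _ (Fiter_pm N)).
  - rewrite (G_pT 0), (G_pL 0), Gd_same. apply (pm_TL _ (Fiter_pm 0)).
  - rewrite (G_pL 0), (G_pR 0), Gd_same. apply (pm_LR _ (Fiter_pm 0)).
  - rewrite (G_pT 0), (G_pR 0), Gd_same. apply (pm_TR _ (Fiter_pm 0)).
Qed.

Open Scope R_scope.

Definition lab_up (m : Mlab) (u : {n : nat & car (Fiter n)}) : {n : nat & car (Fiter n)} :=
  match u with existT _ n x => Gpt (S n) (qcl (geq (Fiter n)) (m, x)) end.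

Lemma lab_up_Geq m u u' : Geq u u' -> Geq (lab_up m u) (lab_up m u').
Proof.
  intros H. induction H.
  - destruct H as [n x]. apply rst_step.
    change (Gstep (Gpt (S n) (qcl (geq (Fiter n)) (m, x))) (Gpt (S (S n)) (qcl (geq (Fiter (S n))) (m, emb n x)))).
    assert (E : emb (S n) (qcl (geq (Fiter n)) (m, x)) = qcl (geq (Fiter (S n))) (m, emb n x)).
    { apply (Mtmap_qcl (Fiter n) (Fiter (S n)) (emb n) (emb_T n) (emb_L n) (emb_R n)). }
    rewrite <- E. apply (gstep (S n)).
  - apply rst_refl.
  - apply rst_sym; auto.
  - eapply rst_trans; eauto.
Qed.

Definition RG (p p' : Mlab * car G) : Prop :=
  Geq (lab_up (fst p) (qrep (snd p))) (lab_up (fst p') (qrep (snd p'))).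

Lemma rep_T : Geq (Gpt 0%nat iT) (qrep (@pT G)).
Proof. exact (qrep_qcl Geq (Gpt 0%nat iT) (fun a => rst_refl _ _ a)). Qed.
Lemma rep_L : Geq (Gpt 0%nat iL) (qrep (@pL G)).
Proof. exact (qrep_qcl Geq (Gpt 0%nat iL) (fun a => rst_refl _ _ a)). Qed.
Lemma rep_R : Geq (Gpt 0%nat iR) (qrep (@pR G)).
Proof. exact (qrep_qcl Geq (Gpt 0%nat iR) (fun a => rst_refl _ _ a)). Qed.

Lemma glue_RG p p' : glue G p p' -> RG p p'.
Proof.
  intros H. unfold RG. destruct H; simpl.
  - eapply rst_trans; [apply rst_sym, lab_up_Geq, rep_T|].
    eapply rst_trans; [|apply lab_up_Geq, rep_L]. simpl.
    assert (E : qcl (geq I3) (mb, iT) = qcl (geq I3) (ma, iL)).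
    { apply qcl_eq; [apply equiv_rst|]. apply rst_step. apply (glue1 I3). }
    match goal with |- clos_refl_sym_trans _ _ (existT _ _ ?a) (existT _ _ ?b) =>
      replace a with b by (symmetry; exact E) end. apply rst_refl.
  - eapply rst_trans; [apply rst_sym, lab_up_Geq, rep_R|].
    eapply rst_trans; [|apply lab_up_Geq, rep_T]. simpl.
    assert (E : qcl (geq I3) (ma, iR) = qcl (geq I3) (mc, iT)).
    { apply qcl_eq; [apply equiv_rst|]. apply rst_step. apply (glue2 I3). }
    match goal with |- clos_refl_sym_trans _ _ (existT _ _ ?a) (existT _ _ ?b) =>
      replace a with b by (symmetry; exact E) end. apply rst_refl.
  - eapply rst_trans; [apply rst_sym, lab_up_Geq, rep_L|].
    eapply rst_trans; [|apply lab_up_Geq, rep_R]. simpl.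
    assert (E : qcl (geq I3) (mc, iL) = qcl (geq I3) (mb, iR)).
    { apply qcl_eq; [apply equiv_rst|]. apply rst_step. apply (glue3 I3). }
    match goal with |- clos_refl_sym_trans _ _ (existT _ _ ?a) (existT _ _ ?b) =>
      replace a with b by (symmetry; exact E) end. apply rst_refl.
Qed.

Lemma geq_RG p p' : geq G p p' -> RG p p'.
Proof.
  intros H. induction H.
  - apply glue_RG; auto.
  - apply rst_refl.
  - apply rst_sym; auto.
  - eapply rst_trans; eauto.
Qed.

Lemma gmap_eq q : gmap q = qcl Geq (lab_up (fst (qrep q)) (qrep (snd (qrep q)))).
Proof.
  unfold gmap. destruct (qrep q) as [m w]. simpl. destruct (qrep w) as [n x]. reflexivity.
Qed.

Lemma GM m n x : gmap (qcl (geq G) (m, Gcl n x)) = Gcl (S n) (qcl (geq (Fiter n)) (m, x)).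
Proof.
  rewrite gmap_eq. unfold Gcl. apply qcl_eq; [apply Geq_equiv|].
  pose proof (qrep_qcl (geq G) (m, Gcl n x) (fun a => rst_refl _ _ a)) as H.
  apply geq_RG in H. unfold RG in H. simpl in H.
  change (Gpt (S n) (qcl (geq (Fiter n)) (m, x))) with (lab_up m (Gpt n x)).
  apply rst_sym. eapply rst_trans; [|exact H].
  apply lab_up_Geq. unfold Gcl. apply qrep_qcl. intros; apply rst_refl.
Qed.

Lemma gmap_dist m w m' w' :
  @dist G (gmap (qcl (geq G) (m, w))) (gmap (qcl (geq G) (m', w'))) = DY G (m, w) (m', w').
Proof.
  destruct (G_common2 w w') as [N [a [b [-> ->]]]].
  rewrite !GM, Gd_same.
  transitivity (DY (Fiter N) (m, a) (m', b)); [exact (MT_dist (Fiter N) (Fiter_pm N) _ _)|].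
  unfold DY. rewrite (G_pT N), (G_pL N), (G_pR N). symmetry.
  apply (Dform_map (@dist (Fiter N)) (@dist G) (Gcl N)). intros; apply Gd_same.
Qed.

Lemma G_decomp (w : car G) : exists m w', w = gmap (qcl (geq G) (m, w')).
Proof.
  destruct (Gcl_rep w) as [n [x ->]]. destruct n as [|k].
  - assert (E : Gcl 0%nat x = Gcl 1%nat (emb 0%nat x)).
    { apply qcl_eq; [apply Geq_equiv|]. apply rst_step. apply (gstep 0%nat). }
    rewrite E. destruct x; [exists ma, (Gcl 0%nat iT)|exists mb, (Gcl 0%nat iL)|exists mc, (Gcl 0%nat iR)];
      rewrite GM; reflexivity.
  - rewrite <- (qcl_qrep x). destruct (qrep x) as [m y]. exists m, (Gcl k y). rewrite GM. reflexivity.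
Qed.

Lemma gmap_T : gmap (qcl (geq G) (ma, @pT G)) = @pT G.
Proof.
  change (@pT G) with (Gcl 0%nat iT) at 1. rewrite GM. change (@pT G) with (Gcl 0%nat iT).
  apply qcl_eq; [apply Geq_equiv|]. apply rst_sym, rst_step. apply (gstep 0%nat iT).
Qed.
Lemma gmap_L : gmap (qcl (geq G) (mb, @pL G)) = @pL G.
Proof.
  change (@pL G) with (Gcl 0%nat iL) at 1. rewrite GM. change (@pL G) with (Gcl 0%nat iL).
  apply qcl_eq; [apply Geq_equiv|]. apply rst_sym, rst_step. apply (gstep 0%nat iL).
Qed.
Lemma gmap_R : gmap (qcl (geq G) (mc, @pR G)) = @pR G.
Proof.
  change (@pR G) with (Gcl 0%nat iR) at 1. rewrite GM. change (@pR G) with (Gcl 0%nat iR).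
  apply qcl_eq; [apply Geq_equiv|]. apply rst_sym, rst_step. apply (gstep 0%nat iR).
Qed.

Open Scope R_scope.

Lemma cvE (a : nat -> R) l : Un_cv a l <-> forall eps, eps > 0 -> exists N, forall n, (n >= N)%nat -> Rabs (a n - l) < eps.
Proof. unfold Un_cv, Rdist. tauto. Qed.

Lemma cv_ext (a b : nat -> R) l : (forall n, a n = b n) -> Un_cv a l -> Un_cv b l.
Proof. intros E H eps He. destruct (H eps He) as [N HN]. exists N. intros n Hn. rewrite <- E. auto. Qed.

Lemma cv_const c : Un_cv (fun _ => c) c.
Proof. intros eps He. exists 0%nat. intros. unfold Rdist. rewrite Rminus_diag, Rabs_R0. lra. Qed.

Lemma cv_bound (a b : nat -> R) l : (forall n, Rabs (a n - l) <= b n) -> Un_cv b 0 -> Un_cv a l.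
Proof.
  intros Hb H eps He. destruct (H eps He) as [N HN]. exists N. intros n Hn.
  specialize (HN n Hn). unfold Rdist in *. rewrite Rminus_0_r in HN.
  pose proof (Hb n). pose proof (Rle_abs (b n)). lra.
Qed.

Lemma cv_sum0 (a b : nat -> R) : Un_cv a 0 -> Un_cv b 0 -> Un_cv (fun n => a n + b n) 0.
Proof.
  intros Ha Hb eps He. destruct (Ha (eps/2) ltac:(lra)) as [N1 H1]. destruct (Hb (eps/2) ltac:(lra)) as [N2 H2].
  exists (N1 + N2)%nat. intros n Hn. specialize (H1 n ltac:(lia)). specialize (H2 n ltac:(lia)).
  unfold Rdist in *. rewrite Rminus_0_r in *.
  pose proof (Rabs_triang (a n) (b n)). lra.
Qed.

Lemma cv_sq0 (a b : nat -> R) : (forall n, 0 <= a n <= b n) -> Un_cv b 0 -> Un_cv a 0.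
Proof.
  intros Hab Hb. apply (cv_bound a b 0); auto. intros n. rewrite Rminus_0_r.
  specialize (Hab n). rewrite Rabs_right; lra.
Qed.

Lemma cv_lin (a b : nat -> R) la lb c1 c2 c0 :
  Un_cv a la -> Un_cv b lb -> Un_cv (fun n => c1 * a n + c2 * b n + c0) (c1 * la + c2 * lb + c0).
Proof.
  intros Ha Hb. apply (cv_bound _ (fun n => Rabs c1 * Rabs (a n - la) + Rabs c2 * Rabs (b n - lb))).
  - intros n. replace (c1 * a n + c2 * b n + c0 - (c1 * la + c2 * lb + c0)) with
      (c1 * (a n - la) + c2 * (b n - lb)) by ring.
    rewrite <- !Rabs_mult. apply Rabs_triang.
  - apply cv_sum0.
    + intros eps He. destruct (Ha (eps / (Rabs c1 + 1))) as [N HN].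
      { apply Rdiv_lt_0_compat; [lra|]. pose proof (Rabs_pos c1); lra. }
      exists N. intros n Hn. specialize (HN n Hn). unfold Rdist in *. rewrite Rminus_0_r.
      pose proof (Rabs_pos c1). pose proof (Rabs_pos (a n - la)).
      rewrite Rabs_right by (apply Rle_ge; apply Rmult_le_pos; auto).
      apply Rle_lt_trans with ((Rabs c1 + 1) * Rabs (a n - la)); [nra|].
      apply Rmult_lt_compat_l with (r := Rabs c1 + 1) in HN; [|lra].
      replace ((Rabs c1 + 1) * (eps / (Rabs c1 + 1))) with eps in HN by (field; lra). lra.
    + intros eps He. destruct (Hb (eps / (Rabs c2 + 1))) as [N HN].
      { apply Rdiv_lt_0_compat; [lra|]. pose proof (Rabs_pos c2); lra. }
      exists N. intros n Hn. specialize (HN n Hn). unfold Rdist in *. rewrite Rminus_0_r.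
      pose proof (Rabs_pos c2). pose proof (Rabs_pos (b n - lb)).
      rewrite Rabs_right by (apply Rle_ge; apply Rmult_le_pos; auto).
      apply Rle_lt_trans with ((Rabs c2 + 1) * Rabs (b n - lb)); [nra|].
      apply Rmult_lt_compat_l with (r := Rabs c2 + 1) in HN; [|lra].
      replace ((Rabs c2 + 1) * (eps / (Rabs c2 + 1))) with eps in HN by (field; lra). lra.
Qed.

Lemma cv_min (a b : nat -> R) la lb : Un_cv a la -> Un_cv b lb -> Un_cv (fun n => Rmin (a n) (b n)) (Rmin la lb).
Proof.
  intros Ha Hb eps He. destruct (Ha eps He) as [N1 H1]. destruct (Hb eps He) as [N2 H2].
  exists (N1 + N2)%nat. intros n Hn. specialize (H1 n ltac:(lia)). specialize (H2 n ltac:(lia)).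
  unfold Rdist in *. apply Rabs_def2 in H1. apply Rabs_def2 in H2. apply Rabs_def1;
  unfold Rmin; destruct (Rle_dec (a n) (b n)); destruct (Rle_dec la lb); lra.
Qed.

Lemma cv_le (a b : nat -> R) la lb : (forall n, a n <= b n) -> Un_cv a la -> Un_cv b lb -> la <= lb.
Proof.
  intros Hab Ha Hb. destruct (Rle_dec la lb) as [|Hn]; auto. exfalso.
  assert (He : (la - lb) / 2 > 0) by lra.
  destruct (Ha _ He) as [N1 H1]. destruct (Hb _ He) as [N2 H2].
  specialize (H1 (N1 + N2)%nat ltac:(lia)). specialize (H2 (N1 + N2)%nat ltac:(lia)).
  unfold Rdist in *. apply Rabs_def2 in H1. apply Rabs_def2 in H2. specialize (Hab (N1 + N2)%nat). lra.
Qed.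

Lemma Rlim_eq a l : Un_cv a l -> Rlim a = l.
Proof.
  intros H. unfold Rlim. apply (UL_sequence a); auto. apply epsilon_spec. exists l; auto.
Qed.

Definition dG := @dist G.
Lemma dG_pos x y : 0 <= dG x y. Proof. apply (pm_pos _ G_pm). Qed.
Lemma dG_sym x y : dG x y = dG y x. Proof. apply (pm_sym _ G_pm). Qed.
Lemma dG_tri x y z : dG x z <= dG x y + dG y z. Proof. apply (pm_tri _ G_pm). Qed.
Lemma dG_self x : dG x x = 0. Proof. apply (pm_self _ G_pm). Qed.

Lemma dG_diff a b c d : Rabs (dG a b - dG c d) <= dG a c + dG b d.
Proof.
  pose proof (dG_tri a c b). pose proof (dG_tri c a d). pose proof (dG_tri a b d). pose proof (dG_tri c d b).
  rewrite (dG_sym c a) in *. rewrite (dG_sym d b) in *.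
  apply Rabs_le. lra.
Qed.

Lemma cauchy_pair (u v : CSeq) : Cauchy_crit (fun k => dG (proj1_sig u k) (proj1_sig v k)).
Proof.
  intros eps He. destruct u as [u Hu], v as [v Hv]. simpl.
  destruct (Hu (eps/2) ltac:(lra)) as [N1 H1]. destruct (Hv (eps/2) ltac:(lra)) as [N2 H2].
  exists (N1 + N2)%nat. intros n m Hn Hm. unfold Rdist.
  pose proof (dG_diff (u n) (v n) (u m) (v m)).
  specialize (H1 n m ltac:(lia) ltac:(lia)). specialize (H2 n m ltac:(lia) ltac:(lia)).
  unfold dG in *. lra.
Qed.

Lemma pair_cv (u v : CSeq) : exists l, Un_cv (fun k => dG (proj1_sig u k) (proj1_sig v k)) l.
Proof. destruct (R_complete _ (cauchy_pair u v)) as [l Hl]. exists l; exact Hl. Qed.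

Lemma Srel_equiv : equivR Srel.
Proof.
  split; [|split].
  - intros u. unfold Srel. apply (cv_ext (fun _ => 0)); [intros; symmetry; apply (pm_self _ G_pm)|apply cv_const].
  - intros u v H. unfold Srel in *. apply (cv_ext _ _ 0 (fun n => pm_sym _ G_pm _ _) H).
  - intros u v w H1 H2. unfold Srel in *.
    apply (cv_sq0 _ _ (fun n => conj (pm_pos _ G_pm _ _) (pm_tri _ G_pm _ (proj1_sig v n) _))).
    apply cv_sum0; auto.
Qed.

Lemma Srel_refl u : Srel u u. Proof. destruct Srel_equiv as [H _]; apply H. Qed.

Lemma cv_Srel (u u' v v' : CSeq) l : Srel u u' -> Srel v v' ->
  Un_cv (fun k => dG (proj1_sig u' k) (proj1_sig v' k)) l ->
  Un_cv (fun k => dG (proj1_sig u k) (proj1_sig v k)) l.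
Proof.
  intros H1 H2 H. intros eps He. destruct (H (eps/2) ltac:(lra)) as [N0 H0].
  destruct (H1 (eps/4) ltac:(lra)) as [N1 G1]. destruct (H2 (eps/4) ltac:(lra)) as [N2 G2].
  exists (N0 + N1 + N2)%nat. intros n Hn.
  specialize (H0 n ltac:(lia)). specialize (G1 n ltac:(lia)). specialize (G2 n ltac:(lia)).
  unfold Rdist in *. rewrite Rminus_0_r in *.
  pose proof (dG_diff (proj1_sig u n) (proj1_sig v n) (proj1_sig u' n) (proj1_sig v' n)).
  rewrite Rabs_right in G1 by (apply Rle_ge, (pm_pos _ G_pm)).
  rewrite Rabs_right in G2 by (apply Rle_ge, (pm_pos _ G_pm)).
  unfold dG in *.
  replace (dist (proj1_sig u n) (proj1_sig v n) - l) with
    ((dist (proj1_sig u n) (proj1_sig v n) - dist (proj1_sig u' n) (proj1_sig v' n)) +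
     (dist (proj1_sig u' n) (proj1_sig v' n) - l)) by ring.
  eapply Rle_lt_trans; [apply Rabs_triang|]. lra.
Qed.

Definition dS := @dist S3.

Lemma dS_cv (u v : CSeq) : Un_cv (fun k => dG (proj1_sig u k) (proj1_sig v k)) (dS (qcl Srel u) (qcl Srel v)).
Proof.
  pose proof (qrep_qcl Srel u Srel_refl) as Hu. pose proof (qrep_qcl Srel v Srel_refl) as Hv.
  destruct (pair_cv (qrep (qcl Srel u)) (qrep (qcl Srel v))) as [l Hl].
  unfold dS. change (@dist S3 (qcl Srel u) (qcl Srel v)) with
    (Rlim (fun k => dG (proj1_sig (qrep (qcl Srel u)) k) (proj1_sig (qrep (qcl Srel v)) k))).
  rewrite (Rlim_eq _ l Hl).
  apply (cv_Srel u _ v _ l Hu Hv Hl).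
Qed.

Lemma dS_eq0 s t : dS s t = 0 -> s = t.
Proof.
  rewrite <- (qcl_qrep s), <- (qcl_qrep t). intros H. apply qcl_eq; [apply Srel_equiv|].
  unfold Srel. rewrite <- H. apply dS_cv.
Qed.

Lemma S_pm : pm S3.
Proof.
  constructor.
  - intros s t. rewrite <- (qcl_qrep s), <- (qcl_qrep t).
    apply (cv_le (fun _ => 0) _ 0 _ (fun n => dG_pos _ _) (cv_const 0) (dS_cv _ _)).
  - intros s. rewrite <- (qcl_qrep s).
    apply (UL_sequence (fun k => dG (proj1_sig (qrep s) k) (proj1_sig (qrep s) k))); [apply dS_cv|].
    apply (cv_ext (fun _ => 0)); [intros; symmetry; apply dG_self | apply cv_const].
  - intros s t. rewrite <- (qcl_qrep s), <- (qcl_qrep t).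
    apply (UL_sequence (fun k => dG (proj1_sig (qrep s) k) (proj1_sig (qrep t) k))); [apply dS_cv|].
    apply (cv_ext (fun k => dG (proj1_sig (qrep t) k) (proj1_sig (qrep s) k))); [intros; apply dG_sym|].
    apply dS_cv.
  - intros s t w. rewrite <- (qcl_qrep s), <- (qcl_qrep t), <- (qcl_qrep w).
    pose proof (cv_lin _ _ _ _ 1 1 0 (dS_cv (qrep s) (qrep t)) (dS_cv (qrep t) (qrep w))) as H.
    assert (K : forall n, dG (proj1_sig (qrep s) n) (proj1_sig (qrep w) n) <=
      1 * dG (proj1_sig (qrep s) n) (proj1_sig (qrep t) n) + 1 * dG (proj1_sig (qrep t) n) (proj1_sig (qrep w) n) + 0).
    2: { pose proof (cv_le _ _ _ _ K (dS_cv (qrep s) (qrep w)) H). unfold dS in *. lra. }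
    intros n. pose proof (dG_tri (proj1_sig (qrep s) n) (proj1_sig (qrep t) n) (proj1_sig (qrep w) n)).
    lra.
  - intros s t. rewrite <- (qcl_qrep s), <- (qcl_qrep t).
    apply (cv_le _ (fun _ => 1) _ 1 (fun n => pm_le1 _ G_pm _ _) (dS_cv _ _) (cv_const 1)).
  - apply (UL_sequence (fun k => dG (@pT G) (@pL G))); [apply (dS_cv (constG pT) (constG pL))|].
    unfold dG; rewrite (pm_TL _ G_pm). apply cv_const.
  - apply (UL_sequence (fun k => dG (@pL G) (@pR G))); [apply (dS_cv (constG pL) (constG pR))|].
    unfold dG; rewrite (pm_LR _ G_pm). apply cv_const.
  - apply (UL_sequence (fun k => dG (@pT G) (@pR G))); [apply (dS_cv (constG pT) (constG pR))|].
    unfold dG; rewrite (pm_TR _ G_pm). apply cv_const.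
Qed.

Open Scope R_scope.

Lemma Dform_same Y m x y : DY Y (m, x) (m, y) = dist x y / 2.
Proof. unfold DY, Dform; simpl. rewrite Mlab_eqb_refl. reflexivity. Qed.

Lemma gmap_same m a b : dG (gmap (qcl (geq G) (m, a))) (gmap (qcl (geq G) (m, b))) = dG a b / 2.
Proof. unfold dG. rewrite gmap_dist, Dform_same. reflexivity. Qed.

Lemma psi_cauchy m (u : CSeq) : cauchy (@dist G) (fun k => gmap (qcl (geq G) (m, proj1_sig u k))).
Proof.
  destruct u as [u Hu]. cbn [proj1_sig]. intros eps He. destruct (Hu eps He) as [N HN]. exists N.
  intros i j Hi Hj. pose proof (gmap_same m (u i) (u j)). specialize (HN i j Hi Hj).
  pose proof (dG_pos (u i) (u j)). unfold dG in *. lra.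
Qed.

Definition psiC (m : Mlab) (u : CSeq) : CSeq :=
  exist _ (fun k => gmap (qcl (geq G) (m, proj1_sig u k))) (psi_cauchy m u).
Definition Psi (m : Mlab) (s : car S3) : car S3 := qcl Srel (psiC m (qrep s)).
Definition PsiP (p : car (Mtensor S3)) : car S3 := Psi (fst (qrep p)) (snd (qrep p)).

Lemma psiC_Srel m u v : Srel u v -> Srel (psiC m u) (psiC m v).
Proof.
  unfold Srel. intros H. cbn [proj1_sig psiC].
  pose proof (cv_lin _ _ _ _ (/2) 0 0 H (cv_const 0)) as K.
  replace (/2 * 0 + 0 * 0 + 0) with 0 in K by ring.
  refine (cv_ext _ _ 0 _ K). intros k. cbv beta.
  pose proof (gmap_same m (proj1_sig u k) (proj1_sig v k)). unfold dG in *. lra.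
Qed.

Lemma Psi_qcl m u : Psi m (qcl Srel u) = qcl Srel (psiC m u).
Proof.
  unfold Psi. apply qcl_eq; [apply Srel_equiv|]. apply psiC_Srel.
  destruct Srel_equiv as [_ [Hs _]]. apply Hs. apply qrep_qcl. apply Srel_refl.
Qed.

Lemma corner_cv {A B : Type} (dA : A -> A -> R) (dB : B -> B -> R) (x : nat -> A) (x0 : B)
  aT aL aR bT bL bR :
  Un_cv (fun k => dA (x k) aT) (dB x0 bT) -> Un_cv (fun k => dA (x k) aL) (dB x0 bL) ->
  Un_cv (fun k => dA (x k) aR) (dB x0 bR) ->
  forall m m', Un_cv (fun k => dA (x k) (corner aT aL aR m m')) (dB x0 (corner bT bL bR m m')).
Proof. intros H1 H2 H3 m m'. destruct m, m'; assumption. Qed.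

Lemma Dform_cv {A B : Type} (dA : A -> A -> R) (dB : B -> B -> R) aT aL aR bT bL bR
  (x y : nat -> A) x0 y0 m m' :
  Un_cv (fun k => dA (x k) (y k)) (dB x0 y0) ->
  Un_cv (fun k => dA (x k) aT) (dB x0 bT) -> Un_cv (fun k => dA (x k) aL) (dB x0 bL) ->
  Un_cv (fun k => dA (x k) aR) (dB x0 bR) ->
  Un_cv (fun k => dA (y k) aT) (dB y0 bT) -> Un_cv (fun k => dA (y k) aL) (dB y0 bL) ->
  Un_cv (fun k => dA (y k) aR) (dB y0 bR) ->
  Un_cv (fun k => Dform dA aT aL aR (m, x k) (m', y k)) (Dform dB bT bL bR (m, x0) (m', y0)).
Proof.
  intros Hxy Hx1 Hx2 Hx3 Hy1 Hy2 Hy3. unfold Dform; simpl.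
  pose proof (corner_cv dA dB x x0 aT aL aR bT bL bR Hx1 Hx2 Hx3) as Cx.
  pose proof (corner_cv dA dB y y0 aT aL aR bT bL bR Hy1 Hy2 Hy3) as Cy.
  destruct (Mlab_eqb m m').
  - replace (dB x0 y0 / 2) with (/2 * dB x0 y0 + 0 * 0 + 0) by field.
    apply (cv_ext (fun k => /2 * dA (x k) (y k) + 0 * 0 + 0)); [intros; field|].
    apply cv_lin; auto. apply cv_const.
  - apply cv_min.
    + replace ((dB x0 (corner bT bL bR m m') + dB y0 (corner bT bL bR m' m)) / 2) with
        (/2 * dB x0 (corner bT bL bR m m') + /2 * dB y0 (corner bT bL bR m' m) + 0) by field.
      apply (cv_ext (fun k => /2 * dA (x k) (corner aT aL aR m m') + /2 * dA (y k) (corner aT aL aR m' m) + 0));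
        [intros; field|].
      apply cv_lin; auto.
    + set (t := third m m').
      replace ((dB x0 (corner bT bL bR m t) + 1 + dB y0 (corner bT bL bR m' t)) / 2) with
        (/2 * dB x0 (corner bT bL bR m t) + /2 * dB y0 (corner bT bL bR m' t) + /2) by field.
      apply (cv_ext (fun k => /2 * dA (x k) (corner aT aL aR m t) + /2 * dA (y k) (corner aT aL aR m' t) + /2));
        [intros; field|].
      apply cv_lin; auto.
Qed.

Lemma dS_cv_const (u : CSeq) (w : car G) :
  Un_cv (fun k => dG (proj1_sig u k) w) (dS (qcl Srel u) (qcl Srel (constG w))).
Proof. apply (dS_cv u (constG w)). Qed.

Lemma Psi_dist m s m' s' : dS (Psi m s) (Psi m' s') = DY S3 (m, s) (m', s').
Proof.
  rewrite <- (qcl_qrep s), <- (qcl_qrep s'). set (u := qrep s). set (v := qrep s').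
  rewrite !Psi_qcl.
  apply (UL_sequence (fun k => dG (proj1_sig (psiC m u) k) (proj1_sig (psiC m' v) k))); [apply dS_cv|].
  cbn [proj1_sig psiC]. apply (cv_ext (fun k => DY G (m, proj1_sig u k) (m', proj1_sig v k))).
  { intros k. unfold dG. rewrite gmap_dist. reflexivity. }
  unfold DY. apply Dform_cv; try apply dS_cv; apply dS_cv_const.
Qed.

Lemma Psi_glue p p' : glue S3 p p' -> Psi (fst p) (snd p) = Psi (fst p') (snd p').
Proof.
  intros H. apply dS_eq0. rewrite Psi_dist.
  pose proof S_pm as HS. pmc HS.
  pose proof (pm_pos _ HS (@pT S3) (@pR S3)).
  destruct H; unfold DY, Dform; cbn [fst snd Mlab_eqb corner third]; rmin; lra.
Qed.

Lemma PsiP_qcl m s : PsiP (qcl (geq S3) (m, s)) = Psi m s.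
Proof.
  unfold PsiP. pose proof (qrep_qcl (geq S3) (m, s) (fun a => rst_refl _ _ a)) as H.
  symmetry. apply (rst_inv (glue S3) (fun p => Psi (fst p) (snd p)) Psi_glue _ _ H).
Qed.

Lemma psi_rel_iff p t : psi_rel p t <-> PsiP p = t.
Proof.
  unfold psi_rel, PsiP. destruct (qrep p) as [m sg]. simpl.
  change (Un_cv (fun k => dist (gmap (qcl (geq G) (m, proj1_sig (qrep sg) k))) (proj1_sig (qrep t) k)) 0)
    with (Srel (psiC m (qrep sg)) (qrep t)).
  unfold Psi. split.
  - intros H. rewrite <- (qcl_qrep t). apply qcl_eq; [apply Srel_equiv|exact H].
  - intros H. assert (K : Srel (psiC m (qrep sg)) (qrep t)).
    { apply (qcl_inj Srel); [apply Srel_refl|]. rewrite H. symmetry. apply qcl_qrep. }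
    exact K.
Qed.

Lemma psi_surj t : exists p, psi_rel p t.
Proof.
  set (u := qrep t).
  assert (D : forall k, exists p : Mlab * car G, proj1_sig u k = gmap (qcl (geq G) p)).
  { intros k. destruct (G_decomp (proj1_sig u k)) as [m [w E]]. exists (m, w). exact E. }
  set (P := fun k => proj1_sig (constructive_indefinite_description _ (D k))).
  assert (HP : forall k, proj1_sig u k = gmap (qcl (geq G) (P k))).
  { intros k. unfold P. destruct (constructive_indefinite_description _ _). simpl. auto. }
  assert (Inf : exists m, forall N, exists k, (k >= N)%nat /\ fst (P k) = m).
  { destruct (classic (forall N, exists k, (k >= N)%nat /\ fst (P k) = ma)) as [H|Ha]; [exists ma; auto|].
    destruct (classic (forall N, exists k, (k >= N)%nat /\ fst (P k) = mb)) as [H|Hb]; [exists mb; auto|].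
    destruct (classic (forall N, exists k, (k >= N)%nat /\ fst (P k) = mc)) as [H|Hc]; [exists mc; auto|].
    exfalso. apply not_all_ex_not in Ha, Hb, Hc.
    destruct Ha as [Na Ha], Hb as [Nb Hb], Hc as [Nc Hc].
    set (k := (Na + Nb + Nc)%nat).
    destruct (fst (P k)) eqn:E.
    - apply Ha. exists k. split; [unfold k; lia|auto].
    - apply Hb. exists k. split; [unfold k; lia|auto].
    - apply Hc. exists k. split; [unfold k; lia|auto]. }
  destruct Inf as [m Inf].
  set (nx := fun N => proj1_sig (constructive_indefinite_description _ (Inf N))).
  assert (Hnx : forall N, (nx N >= N)%nat /\ fst (P (nx N)) = m).
  { intros N. unfold nx. destruct (constructive_indefinite_description _ _). simpl. auto. }
  set (sg := fix f (j : nat) : nat := match j with 0%nat => nx 0%nat | S j' => nx (S (f j')) end).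
  assert (Hsg : forall j, (sg j >= j)%nat /\ fst (P (sg j)) = m).
  { induction j; simpl.
    - apply Hnx.
    - destruct (Hnx (S (sg j))) as [H1 H2]. split; [lia|auto]. }
  assert (Hu2 : forall j, proj1_sig u (sg j) = gmap (qcl (geq G) (m, snd (P (sg j))))).
  { intros j. rewrite HP. destruct (P (sg j)) as [m0 w0] eqn:E. simpl.
    destruct (Hsg j) as [_ Hm]. rewrite E in Hm. simpl in Hm. subst. reflexivity. }
  assert (Hc : cauchy (@dist G) (fun j => snd (P (sg j)))).
  { intros eps He. destruct (proj2_sig u (eps/2) ltac:(lra)) as [N HN]. exists N.
    intros i j Hi Hj. pose proof (gmap_same m (snd (P (sg i))) (snd (P (sg j)))) as E.
    rewrite <- !Hu2 in E. destruct (Hsg i), (Hsg j).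
    specialize (HN (sg i) (sg j) ltac:(lia) ltac:(lia)). unfold dG in *. lra. }
  set (sq := exist _ (fun j => snd (P (sg j))) Hc : CSeq).
  exists (qcl (geq S3) (m, qcl Srel sq)). apply psi_rel_iff. rewrite PsiP_qcl, Psi_qcl.
  rewrite <- (qcl_qrep t). apply qcl_eq; [apply Srel_equiv|]. fold u.
  unfold Srel. cbn [proj1_sig psiC sq]. intros eps He. destruct (proj2_sig u eps He) as [N HN]. exists N.
  intros k Hk. unfold Rdist. rewrite Rminus_0_r. rewrite <- Hu2.
  destruct (Hsg k). rewrite Rabs_right by (apply Rle_ge, (pm_pos _ G_pm)).
  apply HN; lia.
Qed.

Lemma sinv_spec t : PsiP (sinv t) = t.
Proof.
  apply psi_rel_iff. unfold sinv. apply epsilon_spec. apply psi_surj.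
Qed.

Lemma Psi_inj m s m' s' : Psi m s = Psi m' s' -> qcl (geq S3) (m, s) = qcl (geq S3) (m', s').
Proof.
  intros H. assert (H0 : DY S3 (m, s) (m', s') = 0).
  { rewrite <- Psi_dist, H. apply (pm_self _ S_pm). }
  unfold DY, Dform in H0; cbn [fst snd] in H0.
  destruct (Mlab_eqb m m') eqn:E.
  - apply Mlab_eqb_true in E. subst. assert (s = s') by (apply dS_eq0; unfold dS; lra). subst. reflexivity.
  - apply Mlab_eqb_false in E.
    pose proof S_pm as HS.
    pose proof (pm_pos _ HS s (corner pT pL pR m m')). pose proof (pm_pos _ HS s' (corner pT pL pR m' m)).
    pose proof (pm_pos _ HS s (corner pT pL pR m (third m m'))).
    pose proof (pm_pos _ HS s' (corner pT pL pR m' (third m m'))).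
    revert H0. rmin; intros H0; [|lra].
    assert (s = corner pT pL pR m m') by (apply dS_eq0; unfold dS; lra).
    assert (s' = corner pT pL pR m' m) by (apply dS_eq0; unfold dS; lra). subst.
    apply qcl_eq; [apply equiv_rst|]. apply glue_corner; auto.
Qed.

Lemma PsiP_inj p p' : PsiP p = PsiP p' -> p = p'.
Proof.
  unfold PsiP. intros H. rewrite <- (qcl_qrep p), <- (qcl_qrep p').
  destruct (qrep p) as [m s], (qrep p') as [m' s']. simpl in H. apply Psi_inj; auto.
Qed.

Open Scope R_scope.

Lemma ph_pos n : 0 < (/2) ^ n.
Proof. apply pow_lt. lra. Qed.
Lemma ph_S n : (/2) ^ (S n) = (/2) ^ n / 2.
Proof. simpl. field. Qed.
Lemma ph_mono i j : (i <= j)%nat -> (/2) ^ j <= (/2) ^ i.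
Proof.
  intros H. induction H; [lra|]. rewrite ph_S. pose proof (ph_pos m). lra.
Qed.
Lemma ph_small eps : 0 < eps -> exists n, 2 * (/2) ^ n < eps.
Proof.
  intros He. destruct (pow_lt_1_zero (/2) ltac:(rewrite Rabs_right; lra) (eps/2) ltac:(lra)) as [N HN].
  exists N. specialize (HN N (le_n N)). rewrite Rabs_right in HN by (apply Rle_ge, Rlt_le, ph_pos). lra.
Qed.
Lemma ph_cv : Un_cv (fun n => 2 * (/2) ^ n) 0.
Proof.
  intros eps He. destruct (ph_small eps He) as [N HN]. exists N. intros n Hn.
  unfold Rdist. rewrite Rminus_0_r. pose proof (ph_pos n). pose proof (ph_mono N n Hn).
  rewrite Rabs_right by lra. lra.
Qed.
Lemma ph_zero a : (forall n, 0 <= a <= 2 * (/2) ^ n) -> a = 0.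
Proof.
  intros H. destruct (Rle_lt_dec a 0) as [Ha|Ha]; [specialize (H 0%nat); lra|].
  destruct (ph_small a Ha) as [n Hn]. specialize (H n). lra.
Qed.

Lemma cv_le_ev (a b : nat -> R) la lb : (exists N, forall n, (n >= N)%nat -> a n <= b n) ->
  Un_cv a la -> Un_cv b lb -> la <= lb.
Proof.
  intros [N0 Hab] Ha Hb. destruct (Rle_dec la lb) as [|Hn]; auto. exfalso.
  assert (He : (la - lb) / 2 > 0) by lra.
  destruct (Ha _ He) as [N1 H1]. destruct (Hb _ He) as [N2 H2].
  specialize (H1 (N0 + N1 + N2)%nat ltac:(lia)). specialize (H2 (N0 + N1 + N2)%nat ltac:(lia)).
  unfold Rdist in *. apply Rabs_def2 in H1. apply Rabs_def2 in H2. specialize (Hab (N0 + N1 + N2)%nat ltac:(lia)). lra.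
Qed.

Definition wseq (z : Ipt) (ms : nat -> Mlab) (k : nat) : car G := Gcl k (word z ms k).

Lemma wstep z ms k : wseq z ms (S k) = gmap (qcl (geq G) (ms 0%nat, wseq z (fun i => ms (S i)) k)).
Proof. unfold wseq. rewrite GM. reflexivity. Qed.

Lemma wcv z k : forall ms, dG (wseq z ms k) (wseq z ms (S k)) <= (/2) ^ k.
Proof.
  induction k; intros ms.
  - simpl. apply (pm_le1 _ G_pm).
  - rewrite (wstep z ms k), (wstep z ms (S k)). rewrite gmap_same. rewrite ph_S.
    specialize (IHk (fun i => ms (S i))). lra.
Qed.

Lemma geom (a : nat -> car G) : (forall k, dG (a k) (a (S k)) <= (/2) ^ k) ->
  forall i j, (i <= j)%nat -> dG (a i) (a j) <= 2 * (/2) ^ i.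
Proof.
  intros H i j Hij.
  assert (K : forall n, dG (a i) (a (i + n)%nat) <= 2 * (/2) ^ i - 2 * (/2) ^ (i + n)).
  { induction n.
    - rewrite Nat.add_0_r, dG_self. lra.
    - pose proof (dG_tri (a i) (a (i + n)%nat) (a (i + S n)%nat)).
      rewrite <- plus_n_Sm in *. pose proof (H (i + n)%nat). rewrite ph_S. lra. }
  replace j with (i + (j - i))%nat by lia. pose proof (K (j - i)%nat). pose proof (ph_pos (i + (j - i))). lra.
Qed.

Lemma wcauchy z ms : cauchy (@dist G) (wseq z ms).
Proof.
  intros eps He. destruct (ph_small eps He) as [N HN]. exists N. intros i j Hi Hj.
  pose proof (geom (wseq z ms) (fun k => wcv z k ms)) as Hg.
  destruct (le_dec i j) as [Hij|Hij].
  - specialize (Hg i j Hij). pose proof (ph_mono N i Hi). unfold dG in *. lra.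
  - specialize (Hg j i ltac:(lia)). pose proof (ph_mono N j Hj). rewrite dG_sym in Hg. unfold dG in *. lra.
Qed.

Definition fC z ms : CSeq := exist _ (wseq z ms) (wcauchy z ms).
Definition fm z ms : car S3 := qcl Srel (fC z ms).

Lemma wbound z ms n k : (k >= n)%nat -> dG (wseq z ms n) (wseq z ms k) <= 2 * (/2) ^ n.
Proof. intros H. apply geom; auto. intros; apply wcv. Qed.

Lemma theta_cv z ms : Un_cv (fun n => dS (embS (wseq z ms n)) (fm z ms)) 0.
Proof.
  apply (cv_sq0 _ (fun n => 2 * (/2) ^ n)); [|apply ph_cv].
  intros n. split; [apply (pm_pos _ S_pm)|].
  unfold embS, fm.
  apply (cv_le_ev _ (fun _ => 2 * (/2) ^ n) _ _ (ex_intro _ n (fun k Hk => wbound z ms n k Hk))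
     (dS_cv (constG (wseq z ms n)) (fC z ms)) (cv_const _)).
Qed.

Lemma fm_shift z ms : Psi (ms 0%nat) (fm z (fun i => ms (S i))) = fm z ms.
Proof.
  unfold fm. rewrite Psi_qcl. apply qcl_eq; [apply Srel_equiv|].
  unfold Srel. cbn [proj1_sig psiC fC].
  apply (cv_sq0 _ (fun n => 2 * (/2) ^ n)); [|apply ph_cv].
  intros k. split; [apply (pm_pos _ G_pm)|].
  rewrite <- wstep. rewrite (pm_sym _ G_pm). pose proof (wcv z k ms). pose proof (ph_pos k). unfold dG in *. lra.
Qed.

Lemma fm_corner z m0 (cG : car G) : gmap (qcl (geq G) (m0, cG)) = cG ->
  fm z (fun _ => m0) = qcl Srel (constG cG).
Proof.
  intros Hc. apply dS_eq0. unfold fm.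
  assert (K : forall k, dG (wseq z (fun _ => m0) k) cG <= (/2) ^ k).
  { induction k.
    - apply (pm_le1 _ G_pm).
    - rewrite wstep. cbv beta. rewrite <- Hc. rewrite gmap_same, ph_S. lra. }
  apply (UL_sequence (fun k => dG (wseq z (fun _ => m0) k) cG)); [apply (dS_cv (fC z _) (constG cG))|].
  apply (cv_sq0 _ (fun n => 2 * (/2) ^ n)); [|apply ph_cv].
  intros k. split; [apply dG_pos|]. pose proof (K k). pose proof (ph_pos k). lra.
Qed.

Open Scope R_scope.

Lemma tri_pm X : is_tri_met X -> pm X.
Proof.
  intros [[Hpos [Hz [Hsym Htri]]] [Hle [H1 [H2 H3]]]]. constructor; auto.
  intros x. apply Hz. reflexivity.
Qed.

Lemma traj_shift X e x i : traj X e x (S i) = traj X e (snd (qrep (e x))) i.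
Proof. induction i; [reflexivity|]. simpl. simpl in IHi. rewrite IHi. reflexivity. Qed.

Lemma lab_shift X e x : (fun i => lab X e x (S i)) = lab X e (snd (qrep (e x))).
Proof. apply functional_extensionality. intros i. unfold lab. rewrite traj_shift. reflexivity. Qed.

Definition fX X e z (x : car X) : car S3 := fm z (lab X e x).

Lemma fX_eq X e z x : fX X e z x = Psi (fst (qrep (e x))) (fX X e z (snd (qrep (e x)))).
Proof.
  unfold fX. rewrite <- (fm_shift z (lab X e x)). rewrite lab_shift. reflexivity.
Qed.

Lemma h_eq X e (h : car X -> car S3) : (forall x, sinv (h x) = Mtmap X S3 h (e x)) ->
  forall x, h x = Psi (fst (qrep (e x))) (h (snd (qrep (e x)))).
Proof.
  intros H x. rewrite <- (sinv_spec (h x)), H. unfold Mtmap. apply PsiP_qcl.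
Qed.

Lemma fX_sinv X e z x : sinv (fX X e z x) = Mtmap X S3 (fX X e z) (e x).
Proof.
  apply PsiP_inj. rewrite sinv_spec. unfold Mtmap. rewrite PsiP_qcl. apply fX_eq.
Qed.

Lemma uniq X e (h1 h2 : car X -> car S3) :
  (forall x, sinv (h1 x) = Mtmap X S3 h1 (e x)) -> (forall x, sinv (h2 x) = Mtmap X S3 h2 (e x)) -> h1 = h2.
Proof.
  intros E1 E2. apply functional_extensionality. intros x. apply dS_eq0.
  apply ph_zero. intros n. split; [apply (pm_pos _ S_pm)|]. revert x.
  induction n; intros x.
  - pose proof (pm_le1 _ S_pm (h1 x) (h2 x)). simpl. unfold dS. lra.
  - rewrite (h_eq X e h1 E1 x), (h_eq X e h2 E2 x). unfold dS. rewrite Psi_dist, Dform_same.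
    specialize (IHn (snd (qrep (e x)))). rewrite ph_S. unfold dS in IHn. lra.
Qed.

Lemma geq_single Y (v0 : Mlab * car Y) : (forall a b, glue Y a b -> (a = v0 <-> b = v0)) ->
  forall v, geq Y v0 v -> v = v0.
Proof.
  intros H. assert (K : forall a b, geq Y a b -> (a = v0 <-> b = v0)).
  { intros a b Hab. induction Hab; auto; try tauto. }
  intros v Hv. apply (K _ _ Hv). reflexivity.
Qed.

Lemma corner_neq X (HX : pm X) : @pT X <> pL /\ @pL X <> pR /\ @pT X <> pR.
Proof.
  pmc HX. split; [|split]; intros E; rewrite E in *; lra.
Qed.

Lemma qrep_single X (HX : pm X) m c : (m, c) = (ma, pT) \/ (m, c) = (mb, pL) \/ (m, c) = (mc, pR) ->
  qrep (qcl (geq X) (m, c)) = (m, c).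
Proof.
  intros Hmc. apply geq_single; [|apply qrep_qcl; intros; apply rst_refl].
  destruct (corner_neq X HX) as [N1 [N2 N3]].
  intros a b Hg. destruct Hg; destruct Hmc as [E|[E|E]]; inversion E; subst;
    split; intros Heq; inversion Heq; try congruence.
Qed.

Lemma f_corner X e z (c : car X) m0 (cG : car G) : qrep (e c) = (m0, c) ->
  gmap (qcl (geq G) (m0, cG)) = cG -> fX X e z c = qcl Srel (constG cG).
Proof.
  intros Hc Hg.
  assert (Ht : forall n, traj X e c n = c).
  { induction n; [reflexivity|]. simpl. rewrite IHn, Hc. reflexivity. }
  assert (Hl : lab X e c = fun _ => m0).
  { apply functional_extensionality. intros n. unfold lab. rewrite Ht, Hc. reflexivity. }
  unfold fX. rewrite Hl. apply fm_corner. exact Hg.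
Qed.

Lemma e_dist X (HX : pm X) (e : car X -> car (Mtensor X)) x y :
  @dist (Mtensor X) (e x) (e y) = DY X (qrep (e x)) (qrep (e y)).
Proof.
  transitivity (@dist (Mtensor X) (qcl (geq X) (qrep (e x))) (qcl (geq X) (qrep (e y)))).
  - rewrite !qcl_qrep. reflexivity.
  - apply MT_dist; auto.
Qed.

Lemma corner_in {A : Type} (cT cL cR : A) m m' :
  corner cT cL cR m m' = cT \/ corner cT cL cR m m' = cL \/ corner cT cL cR m m' = cR.
Proof. destruct m, m'; simpl; tauto. Qed.

Open Scope R_scope.

Lemma Pstep (X : pre3) (HX : pm X) (e : car X -> car (Mtensor X)) (He : continuous_map X (Mtensor X) e)
  (f : car X -> car S3) (Hf : forall x, f x = Psi (fst (qrep (e x))) (f (snd (qrep (e x)))))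
  (c : car X) (m0 : Mlab) (Hc : qrep (e c) = (m0, c))
  (Hout : forall m', m' <> m0 -> dist c (corner pT pL pR m0 m') = 1) (n : nat)
  (IH : exists d, 0 < d /\ forall y, dist c y < d -> dS (f c) (f y) <= (/2) ^ n) :
  exists d, 0 < d /\ forall y, dist c y < d -> dS (f c) (f y) <= (/2) ^ (S n).
Proof.
  destruct IH as [d [Hd Hy]].
  destruct (He c (Rmin (1/4) (d/2))) as [de [Hde He']].
  { apply Rmin_glb_lt; lra. }
  exists de. split; auto. intros y Hyd. specialize (He' y Hyd).
  rewrite e_dist in He' by auto. rewrite Hc in He'.
  unfold dS. rewrite (Hf c), (Hf y). rewrite Hc. cbn [fst snd]. rewrite Psi_dist.
  destruct (qrep (e y)) as [my y'] eqn:Ey. cbn [fst snd].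
  destruct (Mlab_eqb m0 my) eqn:E.
  - apply Mlab_eqb_true in E. subst my. rewrite Dform_same. rewrite Dform_same in He'.
    pose proof (Rmin_r (1/4) (d/2)). assert (dist c y' < d) by lra.
    specialize (Hy y' H0). rewrite ph_S. unfold dS in Hy. lra.
  - exfalso. unfold DY, Dform in He'. cbn [fst snd] in He'. rewrite E in He'.
    apply Mlab_eqb_false in E.
    pose proof (Hout my (not_eq_sym E)). pose proof (Hout (third m0 my) (third_neq1 _ _ E)).
    pose proof (pm_pos _ HX y' (corner pT pL pR my m0)). pose proof (pm_pos _ HX y' (corner pT pL pR my (third m0 my))).
    pose proof (Rmin_l (1/4) (d/2)).
    revert He'. rmin; intros; lra.
Qed.

Lemma Qstep (X : pre3) (HX : pm X) (e : car X -> car (Mtensor X)) (He : continuous_map X (Mtensor X) e)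
  (f : car X -> car S3) (Hf : forall x, f x = Psi (fst (qrep (e x))) (f (snd (qrep (e x)))))
  (HfT : f pT = pT) (HfL : f pL = pL) (HfR : f pR = pR) (n : nat)
  (IHP : forall c, (c = pT \/ c = pL \/ c = pR) ->
     exists d, 0 < d /\ forall y, dist c y < d -> dS (f c) (f y) <= (/2) ^ n)
  (IHQ : forall x, exists d, 0 < d /\ forall y, dist x y < d -> dS (f x) (f y) <= 2 * (/2) ^ n) :
  forall x, exists d, 0 < d /\ forall y, dist x y < d -> dS (f x) (f y) <= 2 * (/2) ^ (S n).
Proof.
  intros x. destruct (qrep (e x)) as [mx x'] eqn:Ex.
  destruct (IHQ x') as [dq [Hdq Hq]].
  destruct (IHP pT (or_introl eq_refl)) as [dT [HdT HT]].
  destruct (IHP pL (or_intror (or_introl eq_refl))) as [dL [HdL HL]].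
  destruct (IHP pR (or_intror (or_intror eq_refl))) as [dR [HdR HR]].
  set (d0 := Rmin dq (Rmin dT (Rmin dL dR))).
  assert (Hd0 : 0 < d0) by (unfold d0; repeat apply Rmin_glb_lt; auto).
  pose proof (Rmin_l dq (Rmin dT (Rmin dL dR))). pose proof (Rmin_r dq (Rmin dT (Rmin dL dR))).
  pose proof (Rmin_l dT (Rmin dL dR)). pose proof (Rmin_r dT (Rmin dL dR)).
  pose proof (Rmin_l dL dR). pose proof (Rmin_r dL dR). fold d0 in H, H0.
  assert (Hcor : forall c w, (c = pT \/ c = pL \/ c = pR) -> dist c w < d0 -> dS (f c) (f w) <= (/2) ^ n).
  { intros c w [ -> | [ -> | -> ] ] Hw; [apply HT | apply HL | apply HR]; lra. }
  destruct (He x (Rmin (1/4) (d0/2))) as [de [Hde He']].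
  { apply Rmin_glb_lt; lra. }
  exists de. split; auto. intros y Hy. specialize (He' y Hy).
  rewrite e_dist in He' by auto. rewrite Ex in He'.
  unfold dS. rewrite (Hf x), (Hf y), Ex. cbn [fst snd]. rewrite Psi_dist.
  destruct (qrep (e y)) as [my y'] eqn:Ey. cbn [fst snd].
  pose proof (Rmin_l (1/4) (d0/2)). pose proof (Rmin_r (1/4) (d0/2)).
  destruct (Mlab_eqb mx my) eqn:E.
  - apply Mlab_eqb_true in E. subst my. rewrite Dform_same. rewrite Dform_same in He'.
    assert (dist x' y' < dq) by lra. specialize (Hq y' H7). rewrite ph_S. unfold dS in Hq. lra.
  - unfold DY, Dform in He' |- *. cbn [fst snd] in He' |- *. rewrite E in He' |- *.
    apply Mlab_eqb_false in E.
    pose proof (pm_pos _ HX x' (corner pT pL pR mx my)). pose proof (pm_pos _ HX y' (corner pT pL pR my mx)).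
    pose proof (pm_pos _ HX x' (corner pT pL pR mx (third mx my))).
    pose proof (pm_pos _ HX y' (corner pT pL pR my (third mx my))).
    assert (K : dist x' (corner pT pL pR mx my) < d0 /\ dist y' (corner pT pL pR my mx) < d0).
    { revert He'. rmin; intros; split; lra. }
    destruct K as [K1 K2].
    eapply Rle_trans; [apply Rmin_l|].
    rewrite <- HfT, <- HfL, <- HfR. rewrite !(corner_map f).
    pose proof (Hcor _ x' (corner_in pT pL pR mx my) ltac:(rewrite (pm_sym _ HX); exact K1)).
    pose proof (Hcor _ y' (corner_in pT pL pR my mx) ltac:(rewrite (pm_sym _ HX); exact K2)).
    rewrite (pm_sym _ S_pm (f x')), (pm_sym _ S_pm (f y')). unfold dS in *. rewrite ph_S. lra.
Qed.

Lemma cont_main (X : pre3) (HX : pm X) (e : car X -> car (Mtensor X)) (He : continuous_map X (Mtensor X) e)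
  (f : car X -> car S3) (Hf : forall x, f x = Psi (fst (qrep (e x))) (f (snd (qrep (e x)))))
  (HfT : f pT = pT) (HfL : f pL = pL) (HfR : f pR = pR)
  (HcT : qrep (e pT) = (ma, pT)) (HcL : qrep (e pL) = (mb, pL)) (HcR : qrep (e pR) = (mc, pR)) :
  continuous_map X S3 f.
Proof.
  assert (PQ : forall n,
    (forall c, (c = pT \/ c = pL \/ c = pR) -> exists d, 0 < d /\ forall y, dist c y < d -> dS (f c) (f y) <= (/2) ^ n) /\
    (forall x, exists d, 0 < d /\ forall y, dist x y < d -> dS (f x) (f y) <= 2 * (/2) ^ n)).
  { induction n as [|n [IHP IHQ]].
    - split.
      + intros c _. exists 1. split; [lra|]. intros y _. simpl. apply (pm_le1 _ S_pm).
      + intros x. exists 1. split; [lra|]. intros y _. simpl. pose proof (pm_le1 _ S_pm (f x) (f y)). unfold dS. lra.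
    - split.
      + pmc HX. intros c [ -> | [ -> | -> ] ].
        * apply (Pstep X HX e He f Hf pT ma HcT); auto.
          intros m' Hm'. destruct m'; try congruence; simpl; lra.
        * apply (Pstep X HX e He f Hf pL mb HcL); auto.
          intros m' Hm'. destruct m'; try congruence; simpl; lra.
        * apply (Pstep X HX e He f Hf pR mc HcR); auto.
          intros m' Hm'. destruct m'; try congruence; simpl; lra.
      + apply (Qstep X HX e He f Hf HfT HfL HfR n IHP IHQ). }
  intros x eps Heps. destruct (ph_small eps Heps) as [n Hn].
  destruct (proj2 (PQ n) x) as [d [Hd Hy]]. exists d. split; auto.
  intros y Hxy. specialize (Hy y Hxy). unfold dS in Hy. lra.
Qed.

Open Scope R_scope.

Theorem mainTheorem8 (X : pre3) (e : car X -> car (Mtensor X)) :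
  is_tri_met X -> morphism3 X (Mtensor X) e ->
  (forall h1 h2 : car X -> car S3,
     morphism3 X S3 h1 -> (forall x, sinv (h1 x) = Mtmap X S3 h1 (e x)) ->
     morphism3 X S3 h2 -> (forall x, sinv (h2 x) = Mtmap X S3 h2 (e x)) ->
     h1 = h2) /\
  (forall z : Ipt, exists f : car X -> car S3,
     (forall x, Un_cv (fun n => Defs.dist (theta X e z n x) (f x)) 0) /\
     morphism3 X S3 f /\
     (forall x, sinv (f x) = Mtmap X S3 f (e x)) /\
     (forall h : car X -> car S3, morphism3 X S3 h ->
        (forall x, sinv (h x) = Mtmap X S3 h (e x)) -> h = f)).
Proof.
  intros Htm [Hc [HeT [HeL HeR]]]. pose proof (tri_pm X Htm) as HX.
  split.
  - intros h1 h2 _ E1 _ E2. apply (uniq X e h1 h2 E1 E2).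
  - intros z. exists (fX X e z).
    assert (HcT : qrep (e pT) = (ma, pT)).
    { rewrite HeT. exact (qrep_single X HX ma pT (or_introl eq_refl)). }
    assert (HcL : qrep (e pL) = (mb, pL)).
    { rewrite HeL. exact (qrep_single X HX mb pL (or_intror (or_introl eq_refl))). }
    assert (HcR : qrep (e pR) = (mc, pR)).
    { rewrite HeR. exact (qrep_single X HX mc pR (or_intror (or_intror eq_refl))). }
    assert (HfT : fX X e z pT = pT) by exact (f_corner X e z pT ma pT HcT gmap_T).
    assert (HfL : fX X e z pL = pL) by exact (f_corner X e z pL mb pL HcL gmap_L).
    assert (HfR : fX X e z pR = pR) by exact (f_corner X e z pR mc pR HcR gmap_R).
    split; [|split; [|split]].
    + intros x. exact (theta_cv z (lab X e x)).
    + split; [|auto].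
      apply (cont_main X HX e Hc (fX X e z) (fX_eq X e z) HfT HfL HfR HcT HcL HcR).
    + apply fX_sinv.
    + intros h _ Eh. apply (uniq X e h (fX X e z) Eh (fX_sinv X e z)).
Qed.
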